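(* (1) Given a family $(\ell_{s,t})_{(s,t)\in\Delta}$ of transition kernels of a branching process on $\mathbb N_0^*$, the functions $F_{s,t}(z)=\sum_{n\ge0}\ell_{s,t}(1,\{n\})z^n$, $z\in\mathbb D$, form a topological reverse evolution family in $\mathbb D$ contained in $\mathcal{PGF}$. (2) Conversely, given a topological reverse evolution family $(F_{s,t})_{(s,t)\in\Delta}$ in $\mathbb D$ contained in $\mathcal{PGF}$, there exists a unique family $(\ell_{s,t})_{(s,t)\in\Delta}$ of transition kernels of a branching process on $\mathbb N_0^*$ such that $F_{s,t}(z)=\sum_{n\ge0}\ell_{s,t}(1,\{n\})z^n$ for all $z\in\mathbb D$, $(s,t)\in\Delta$.
   Context: $\Delta=\{(s,t):0\le s\le t\}$, $\mathbb D=\{|z|<1\}$, $\mathbb N_0=\{0,1,2,\dots\}$, $\mathbb N_0^*=\mathbb N_0\cup\{\infty\}$ with its natural compact topology. A family of transition kernels of a branching process on $\mathbb N_0^*$ is a family $(\ell_{s,t})_{(s,t)\in\Delta}$ of transition kernels on $\mathbb N_0^*$ with: (L1) $\ell_{s,s}(n,\cdot)=\delta_n$; (L2) $\ell_{s,t}\star\ell_{t,u}=\ell_{s,u}$ for $s\le t\le u$, where $(k\star l)(x,B)=\int l(y,B)k(x,\mathrm dy)$; (L3) for each $n\in\mathbb N_0$, $(s,t)\mapsto\ell_{s,t}(n,\cdot)$ is weakly continuous into probability measures on $\mathbb N_0^*$; (L4) $\ell_{s,t}(m,\cdot)\ast\ell_{s,t}(n,\cdot)=\ell_{s,t}(m+n,\cdot)$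 for $m,n\in\mathbb N_0$; (L5) $\ell_{s,t}(0,\cdot)=\delta_0$; (L6) $\ell_{s,t}(\infty,\cdot)=\delta_\infty$. $\mathcal{PGF}$ is the set of power series $\sum_{n\ge0}p_nz^n$ with $p_n\ge0$, $\sum p_n\le1$, excluding the constant $1$; it is a subset of ${\sf Hol}(\mathbb D,\mathbb D)$. A topological reverse evolution family in $\mathbb D$ is $(F_{s,t})\subset{\sf Hol}(\mathbb D,\mathbb D)$ with $F_{s,s}={\rm id}$, $F_{s,u}=F_{s,t}\circ F_{t,u}$ ($s\le t\le u$), and $(s,t)\mapsto F_{s,t}$ continuous for locally uniform convergence. *)

(* Defs.v *)
From Stdlib Require Import Reals.
From Coquelicot Require Export Coquelicot.
Open Scope R_scope.

Inductive Ninf : Type := Fin (n : nat) | Inf.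

Definition Ninf_eq_dec (x y : Ninf) : {x = y} + {x <> y}.
Proof. decide equality. apply PeanoNat.Nat.eq_dec. Defined.

(** N_0^* is countable and its Borel σ-algebra (for the one-point
    compactification topology) is the full power set, so a probability
    measure on N_0^* is the same as a probability mass function, and a
    transition kernel on N_0^* is a map [k : Ninf -> Ninf -> R] with
    [k x] a probability mass function for every [x]:
    [k x y] = k(x,{y}). *)

Definition fin_mass (mu : Ninf -> R) : R := Series (fun n => mu (Fin n)).

Definition is_prob (mu : Ninf -> R) : Prop :=
  (forall x, 0 <= mu x) /\ ex_series (fun n => mu (Fin n)) /\
  fin_mass mu + mu Inf = 1.

Definition integ (mu : Ninf -> R) (f : Ninf -> R) : R :=
  Series (fun n => mu (Fin n) * f (Fin n)) + mu Inf * f Inf.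

Definition dirac (x : Ninf) : Ninf -> R :=
  fun y => if Ninf_eq_dec y x then 1 else 0.

Definition kstar (k l : Ninf -> Ninf -> R) : Ninf -> Ninf -> R :=
  fun x z => integ (k x) (fun y => l y z).

(** Convolution μ * ν: image of μ ⊗ ν under addition on N_0^*
    (with a + ∞ = ∞ + a = ∞).  For finite z: Σ_{i+j=z} μ(i)ν(j);
    for z = ∞: the mass of the pairs (∞,b) plus the pairs (a,∞), a finite. *)
Definition conv (mu nu : Ninf -> R) : Ninf -> R :=
  fun z => match z with
  | Fin k => sum_f_R0 (fun i => mu (Fin i) * nu (Fin (k - i))) k
  | Inf => mu Inf * (fin_mass nu + nu Inf) + fin_mass mu * nu Inf
  end.

(** continuous real functions on N_0^* (one-point compactification:
    finite points are isolated, neighbourhoods of ∞ are cofinite) *)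
Definition Ninf_continuous (f : Ninf -> R) : Prop :=
  is_lim_seq (fun n => f (Fin n)) (f Inf).

Definition in_Delta (s t : R) : Prop := 0 <= s /\ s <= t.

Definition cont_on_Delta (G : R -> R -> R) : Prop :=
  forall s t, in_Delta s t -> forall eps, 0 < eps ->
  exists del, 0 < del /\ forall s' t', in_Delta s' t' ->
    Rabs (s' - s) < del -> Rabs (t' - t) < del ->
    Rabs (G s' t' - G s t) < eps.

Record branching_kernels (l : R -> R -> Ninf -> Ninf -> R) : Prop := {
  bk_prob : forall s t x, in_Delta s t -> is_prob (l s t x);
  bk_L1 : forall s x y, 0 <= s -> l s s x y = dirac x y;
  bk_L2 : forall s t u x z, in_Delta s t -> t <= u ->
            kstar (l s t) (l t u) x z = l s u x z;
  bk_L3 : forall (n : nat) (f : Ninf -> R), Ninf_continuous f ->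
            cont_on_Delta (fun s t => integ (l s t (Fin n)) f);
  bk_L4 : forall s t (m n : nat) z, in_Delta s t ->
            conv (l s t (Fin m)) (l s t (Fin n)) z = l s t (Fin (m + n)) z;
  bk_L5 : forall s t y, in_Delta s t -> l s t (Fin 0) y = dirac (Fin 0) y;
  bk_L6 : forall s t y, in_Delta s t -> l s t Inf y = dirac Inf y
}.

Definition inD (z : C) : Prop := Cmod z < 1.

Definition Hol_DD (f : C -> C) : Prop :=
  (forall z, inD z -> @ex_derive C_AbsRing C_NormedModule f z) /\
  (forall z, inD z -> inD (f z)).

(** Locally
    uniform convergence on D = uniform convergence on each closed disc
    {|z| <= r}, r < 1 (every compact subset of D lies in such a disc). *)
Record top_rev_evol (F : R -> R -> C -> C) : Prop := {
  ev_hol : forall s t, in_Delta s t -> Hol_DD (F s t);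
  ev_id : forall s z, 0 <= s -> inD z -> F s s z = z;
  ev_comp : forall s t u z, in_Delta s t -> t <= u -> inD z ->
              F s u z = F s t (F t u z);
  ev_cont : forall s t, in_Delta s t -> forall r, 0 <= r < 1 ->
              forall eps, 0 < eps -> exists del, 0 < del /\
              forall s' t', in_Delta s' t' ->
                Rabs (s' - s) < del -> Rabs (t' - t) < del ->
                forall z, Cmod z <= r -> Cmod (F s' t' z - F s t z) < eps
}.

Definition in_PGF (f : C -> C) : Prop :=
  exists p : nat -> R,
    (forall n, 0 <= p n) /\ ex_series p /\ Series p <= 1 /\
    ~ (p 0%nat = 1 /\ forall n, (0 < n)%nat -> p n = 0) /\
    forall z, inD z -> is_pseries (fun n => RtoC (p n)) z (f z).

Definition gen_fun_of (l : R -> R -> Ninf -> Ninf -> R) (F : R -> R -> C -> C) : Prop :=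
  forall s t z, in_Delta s t -> inD z ->
    is_pseries (fun n => RtoC (l s t (Fin 1) (Fin n))) z (F s t z).

(* Main.v *)
Require Import Defs.
From Stdlib Require Import Reals Lra Lia ClassicalEpsilon.
From Coquelicot Require Import Coquelicot.
Open Scope R_scope.

Lemma is_series_R_lim (a : nat -> R) l :
  is_series a l <-> is_lim_seq (fun N => sum_f_R0 a N) l.
Proof.
  split; intro H.
  - apply is_lim_seq_ext with (sum_n a); [intro; apply sum_n_Reals|exact H].
  - assert (H' : is_lim_seq (sum_n a) l).
    { apply is_lim_seq_ext with (fun N => sum_f_R0 a N); [intro; symmetry; apply sum_n_Reals|exact H]. }
    exact H'.
Qed.

Lemma pos_series_bounded (a : nat -> R) M :
  (forall n, 0 <= a n) -> (forall N, sum_f_R0 a N <= M) ->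
  ex_series a /\ Series a <= M.
Proof.
  intros Ha HM.
  destruct (growing_cv (fun N => sum_f_R0 a N)) as [l Hl].
  - intro n; simpl; specialize (Ha (S n)); lra.
  - exists M; intros x [N ->]; apply HM.
  - apply is_lim_seq_Reals in Hl.
    assert (Hs : is_series a l) by (apply is_series_R_lim; exact Hl).
    split; [exists l; exact Hs|].
    rewrite (is_series_unique _ _ Hs).
    assert (H := is_lim_seq_le _ _ _ _ HM Hl (is_lim_seq_const M)).
    exact H.
Qed.

Lemma partial_le_series (a : nat -> R) N :
  (forall n, 0 <= a n) -> ex_series a -> sum_f_R0 a N <= Series a.
Proof.
  intros Ha [l Hl].
  rewrite (is_series_unique _ _ Hl).
  apply is_series_R_lim in Hl.
  apply (is_lim_seq_incr_compare _ _ Hl).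
  intro n; simpl; specialize (Ha (S n)); lra.
Qed.

Lemma series_ge0 (a : nat -> R) : (forall n, 0 <= a n) -> ex_series a -> 0 <= Series a.
Proof.
  intros Ha He. eapply Rle_trans; [apply (Ha 0%nat)|].
  apply (partial_le_series a 0 Ha He).
Qed.

Lemma term_le_series (a : nat -> R) n : (forall n, 0 <= a n) -> ex_series a -> a n <= Series a.
Proof.
  intros Ha He. eapply Rle_trans; [|apply (partial_le_series a n Ha He)].
  destruct n; simpl; [lra|].
  assert (0 <= sum_f_R0 a n) by (apply cond_pos_sum; auto). lra.
Qed.

Lemma series_le_gen (a b : nat -> R) : (forall n, a n <= b n) -> ex_series a -> ex_series b ->
  Series a <= Series b.
Proof.
  intros H [la Ha] [lb Hb].
  rewrite (is_series_unique _ _ Ha), (is_series_unique _ _ Hb).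
  apply is_series_R_lim in Ha; apply is_series_R_lim in Hb.
  assert (H' := is_lim_seq_le _ _ _ _ (fun N => sum_Rle _ _ N (fun n _ => H n)) Ha Hb).
  exact H'.
Qed.

Lemma sum_series_swap (a : nat -> nat -> R) K :
  (forall k, ex_series (a k)) ->
  ex_series (fun n => sum_f_R0 (fun k => a k n) K) /\
  Series (fun n => sum_f_R0 (fun k => a k n) K) = sum_f_R0 (fun k => Series (a k)) K.
Proof.
  intro He. induction K as [|K [IH1 IH2]]; simpl.
  - split; [apply He|reflexivity].
  - split.
    + apply (ex_series_plus (fun n => sum_f_R0 (fun k => a k n) K) (a (S K))); auto.
    + rewrite Series_plus; auto. rewrite IH2; reflexivity.
Qed.

Lemma fubini_pos (a : nat -> nat -> R) :
  (forall k n, 0 <= a k n) -> (forall k, ex_series (a k)) ->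
  ex_series (fun k => Series (a k)) ->
  (forall n, ex_series (fun k => a k n)) /\
  ex_series (fun n => Series (fun k => a k n)) /\
  Series (fun n => Series (fun k => a k n)) = Series (fun k => Series (a k)).
Proof.
  intros Hp Hr Hs.
  set (S := Series (fun k => Series (a k))).
  assert (HrP : forall k, 0 <= Series (a k)) by (intro; apply series_ge0; auto).
  assert (Hc : forall n, ex_series (fun k => a k n) /\ Series (fun k => a k n) <= S).
  { intro n. apply pos_series_bounded; [auto|].
    intro N. eapply Rle_trans; [|apply (partial_le_series _ N HrP Hs)].
    apply sum_Rle; intros k _. apply term_le_series; auto. }
  assert (HcP : forall n, 0 <= Series (fun k => a k n)) by (intro; apply series_ge0; auto; apply Hc).
  assert (H1 : ex_series (fun n => Series (fun k => a k n)) /\ Series (fun n => Series (fun k => a k n)) <= S).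
  { apply pos_series_bounded; auto.
    intro N.
    (* sum_{n<=N} Series_k a k n = Series_k sum_{n<=N} a k n <= S *)
    destruct (sum_series_swap (fun n k => a k n) N (fun n => proj1 (Hc n))) as [E1 E2].
    rewrite <- E2.
    apply series_le_gen; auto.
    intro k. apply partial_le_series; auto. }
  split; [intro n; apply Hc|]. split; [apply H1|].
  apply Rle_antisym; [apply H1|].
  apply (pos_series_bounded (fun k => Series (a k)) (Series (fun n => Series (fun k => a k n))) HrP).
  intro K.
  destruct (sum_series_swap a K Hr) as [E1 E2]. rewrite <- E2.
  apply series_le_gen; auto; [|apply H1].
  intro n. apply partial_le_series; auto. apply Hc.
Qed.


Lemma is_series_plusR (a b : nat -> R) la lb : is_series a la -> is_series b lb ->
  is_series (fun n => a n + b n) (la + lb).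
Proof. intros Ha Hb. exact (@is_series_plus R_AbsRing R_NormedModule a b la lb Ha Hb). Qed.

Lemma is_series_minusR (a b : nat -> R) la lb : is_series a la -> is_series b lb ->
  is_series (fun n => a n - b n) (la - lb).
Proof. intros Ha Hb. exact (@is_series_minus R_AbsRing R_NormedModule a b la lb Ha Hb). Qed.

Lemma is_series_scalR (c : R) (a : nat -> R) la : is_series a la ->
  is_series (fun n => c * a n) (c * la).
Proof. intros Ha. exact (@is_series_scal_l R_AbsRing R_NormedModule c a la Ha). Qed.

Lemma is_series_extR (a b : nat -> R) l : (forall n, a n = b n) -> is_series a l -> is_series b l.
Proof. intros H Ha. exact (@is_series_ext R_AbsRing R_NormedModule a b l H Ha). Qed.

Lemma ex_series_extR (a b : nat -> R) : (forall n, a n = b n) -> ex_series a -> ex_series b.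
Proof. intros H Ha. exact (@ex_series_ext R_AbsRing R_NormedModule a b H Ha). Qed.

Lemma ex_series_dom (a b : nat -> R) : (forall n, Rabs (a n) <= b n) -> ex_series b -> ex_series a.
Proof. intros H Hb. apply (@ex_series_le R_AbsRing R_CompleteNormedModule a b); auto. Qed.

Lemma ex_series_abs_dom (a b : nat -> R) : (forall n, Rabs (a n) <= b n) -> ex_series b ->
  ex_series (fun n => Rabs (a n)).
Proof. intros H Hb. apply (ex_series_dom _ b); auto. intro n; rewrite Rabs_Rabsolu; auto. Qed.

Lemma series_abs_dom (a b : nat -> R) : (forall n, Rabs (a n) <= b n) -> ex_series b ->
  Rabs (Series a) <= Series b.
Proof.
  intros H Hb. eapply Rle_trans; [apply Series_Rabs; apply (ex_series_abs_dom _ b); auto|].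
  apply Series_le; auto. intro n; split; [apply Rabs_pos|auto].
Qed.

Lemma DS_R (u d : nat -> nat -> R) (r c : nat -> R) :
  (forall k n, Rabs (u k n) <= d k n) -> (forall k, ex_series (d k)) ->
  ex_series (fun k => Series (d k)) ->
  (forall k, is_series (u k) (r k)) -> (forall n, is_series (fun k => u k n) (c n)) ->
  exists L, is_series r L /\ is_series c L.
Proof.
  intros Hud Hd Hds Hr Hc.
  assert (Hdp : forall k n, 0 <= d k n) by (intros k n; eapply Rle_trans; [apply Rabs_pos|apply Hud]).
  set (v := fun k n => u k n + d k n).
  assert (Hvp : forall k n, 0 <= v k n).
  { intros k n; unfold v; specialize (Hud k n). apply Rabs_le_between in Hud; lra. }
  assert (Hvr : forall k, is_series (v k) (r k + Series (d k))).
  { intro k. apply is_series_plusR; auto. apply Series_correct; auto. }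
  assert (Hrk : forall k, Rabs (r k) <= Series (d k)).
  { intro k. rewrite <- (is_series_unique _ _ (Hr k)). apply series_abs_dom; auto. }
  assert (Hvs : ex_series (fun k => Series (v k))).
  { apply (ex_series_dom _ (fun k => 2 * Series (d k))).
    - intro k. rewrite (is_series_unique _ _ (Hvr k)).
      specialize (Hrk k). assert (0 <= Series (d k)) by (apply series_ge0; auto).
      rewrite Rabs_pos_eq; [|apply Rabs_le_between in Hrk; lra]. apply Rabs_le_between in Hrk; lra.
    - apply (ex_series_scal_l (V:=R_NormedModule) 2 _ Hds). }
  destruct (fubini_pos v Hvp (fun k => ex_intro _ _ (Hvr k)) Hvs) as [Fv1 [Fv2 Fv3]].
  destruct (fubini_pos d Hdp Hd Hds) as [Fd1 [Fd2 Fd3]].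
  exists (Series (fun k => Series (v k)) - Series (fun k => Series (d k))).
  split.
  - apply is_series_extR with (fun k => Series (v k) - Series (d k)).
    { intro k; rewrite (is_series_unique _ _ (Hvr k)); ring. }
    apply is_series_minusR; apply Series_correct; auto.
  - rewrite <- Fv3, <- Fd3.
    apply is_series_extR with (fun n => Series (fun k => v k n) - Series (fun k => d k n)).
    { intro n. unfold v. rewrite Series_plus; [|exists (c n); apply Hc|apply Fd1].
      rewrite (is_series_unique _ _ (Hc n)); ring. }
    apply is_series_minusR; apply Series_correct; auto.
Qed.


Lemma is_seriesC_intro (a : nat -> C) (l : C) :
  (forall eps, 0 < eps -> exists N, forall n, (N <= n)%nat -> Cmod (sum_n a n - l) < eps) ->
  is_series a l.
Proof.
  intro H. unfold is_series. apply filterlim_locally. intro eps.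
  destruct (H eps (cond_pos eps)) as [N HN]. exists N. intros n Hn.
  apply (@norm_compat1 C_AbsRing C_NormedModule). exact (HN n Hn).
Qed.

Lemma is_seriesC_elim (a : nat -> C) (l : C) : is_series a l ->
  forall eps, 0 < eps -> exists N, forall n, (N <= n)%nat -> Cmod (sum_n a n - l) < eps.
Proof.
  intros H eps Heps. unfold is_series in H. assert (H' := proj1 (@filterlim_locally nat C_UniformSpace eventually _ (sum_n a) l) H). clear H; rename H' into H.
  specialize (H (mkposreal _ (Rmult_lt_0_compat _ _ Heps (pos_half_prf)))).
  destruct H as [N HN]. exists N. intros n Hn.
  assert (H2 := C_NormedModule_mixin_compat2 _ _ _ (HN n Hn)). simpl in H2.
  assert (Hs : sqrt 2 < 2).
  { rewrite <- (sqrt_Rsqr 2) at 2 by lra. apply sqrt_lt_1; unfold Rsqr; lra. }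
  assert (0 <= sqrt 2) by apply sqrt_pos.
  change (Cmod (minus (sum_n a n) l) < eps).
  eapply Rlt_le_trans; [exact H2|]. 
  apply Rle_trans with (2 * (eps * /2)); [apply Rmult_le_compat_r; lra|lra].
Qed.

Lemma sum_n_Re (a : nat -> C) n : Re (sum_n a n) = sum_f_R0 (fun k => Re (a k)) n.
Proof.
  induction n. - rewrite sum_O; reflexivity.
  - rewrite sum_Sn. change (Re (sum_n a n) + Re (a (S n)) = sum_f_R0 (fun k => Re (a k)) n + Re (a (S n))).
    rewrite IHn. reflexivity.
Qed.
Lemma sum_n_Im (a : nat -> C) n : Im (sum_n a n) = sum_f_R0 (fun k => Im (a k)) n.
Proof.
  induction n. - rewrite sum_O; reflexivity.
  - rewrite sum_Sn. change (Im (sum_n a n) + Im (a (S n)) = sum_f_R0 (fun k => Im (a k)) n + Im (a (S n))).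
    rewrite IHn. reflexivity.
Qed.

Lemma im_le_Cmod (c : C) : Rabs (Im c) <= Cmod c.
Proof. assert (H := Rmax_Cmod c). eapply Rle_trans; [|exact H]. apply Rmax_r. Qed.

Lemma Cmod_le_ReIm (c : C) : Cmod c <= Rabs (Re c) + Rabs (Im c).
Proof.
  destruct c as [x y]. unfold Cmod; simpl.
  apply Rsqr_incr_0_var; [| apply Rplus_le_le_0_compat; apply Rabs_pos].
  rewrite Rsqr_sqrt; [|nra].
  unfold Rsqr. 
  assert (0 <= Rabs x) by apply Rabs_pos. assert (0 <= Rabs y) by apply Rabs_pos.
  assert (Rabs x * Rabs x = x * x) by (rewrite <- Rabs_mult; apply Rabs_pos_eq; nra).
  assert (Rabs y * Rabs y = y * y) by (rewrite <- Rabs_mult; apply Rabs_pos_eq; nra).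
  nra.
Qed.

Lemma is_seriesC_Re (a : nat -> C) l : is_series a l -> is_series (fun n => Re (a n)) (Re l).
Proof.
  intro H. apply is_series_R_lim. apply is_lim_seq_Reals. intros eps Heps.
  destruct (is_seriesC_elim a l H eps Heps) as [N HN]. exists N. intros n Hn.
  unfold R_dist. rewrite <- sum_n_Re. eapply Rle_lt_trans; [|apply (HN n); lia].
  eapply Rle_trans; [|apply re_le_Cmod]. simpl. right; reflexivity.
Qed.

Lemma is_seriesC_Im (a : nat -> C) l : is_series a l -> is_series (fun n => Im (a n)) (Im l).
Proof.
  intro H. apply is_series_R_lim. apply is_lim_seq_Reals. intros eps Heps.
  destruct (is_seriesC_elim a l H eps Heps) as [N HN]. exists N. intros n Hn.
  unfold R_dist. rewrite <- sum_n_Im. eapply Rle_lt_trans; [|apply (HN n); lia].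
  eapply Rle_trans; [|apply im_le_Cmod]. simpl. right; reflexivity.
Qed.

Lemma is_seriesC_ReIm (a : nat -> C) x y :
  is_series (fun n => Re (a n)) x -> is_series (fun n => Im (a n)) y -> is_series a (x, y).
Proof.
  intros Hx Hy. apply is_seriesC_intro. intros eps Heps.
  apply is_series_R_lim, is_lim_seq_Reals in Hx. apply is_series_R_lim, is_lim_seq_Reals in Hy.
  destruct (Hx (eps/2)) as [N1 H1]; [lra|]. destruct (Hy (eps/2)) as [N2 H2]; [lra|].
  exists (max N1 N2). intros n Hn.
  eapply Rle_lt_trans; [apply Cmod_le_ReIm|].
  assert (E1 : Re (sum_n a n - (x, y))%C = sum_f_R0 (fun k => Re (a k)) n - x).
  { rewrite <- sum_n_Re. reflexivity. }
  assert (E2 : Im (sum_n a n - (x, y))%C = sum_f_R0 (fun k => Im (a k)) n - y).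
  { rewrite <- sum_n_Im. reflexivity. }
  rewrite E1, E2. specialize (H1 n ltac:(lia)). specialize (H2 n ltac:(lia)).
  unfold R_dist in *. lra.
Qed.

Lemma C_eq_ReIm (x y : C) : Re x = Re y -> Im x = Im y -> x = y.
Proof. destruct x, y; simpl; intros -> ->; reflexivity. Qed.

Lemma is_seriesC_unique (a : nat -> C) l1 l2 : is_series a l1 -> is_series a l2 -> l1 = l2.
Proof.
  intros H1 H2. apply C_eq_ReIm.
  - rewrite <- (is_series_unique _ _ (is_seriesC_Re _ _ H1)). rewrite (is_series_unique _ _ (is_seriesC_Re _ _ H2)). reflexivity.
  - rewrite <- (is_series_unique _ _ (is_seriesC_Im _ _ H1)). rewrite (is_series_unique _ _ (is_seriesC_Im _ _ H2)). reflexivity.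
Qed.

Lemma is_series_zero_R : is_series (fun _ : nat => 0) 0.
Proof.
  apply is_series_R_lim. apply is_lim_seq_ext with (fun _ => 0); [|apply is_lim_seq_const].
  intro n; induction n; simpl; [reflexivity|rewrite <- IHn; ring].
Qed.

Lemma is_seriesC_RtoC (a : nat -> R) l : is_series a l -> is_series (fun n => RtoC (a n)) (RtoC l).
Proof.
  intro H. apply is_seriesC_ReIm; simpl.
  - exact H.
  - apply is_series_zero_R.
Qed.

Lemma is_seriesC_ext (a b : nat -> C) l : (forall n, a n = b n) -> is_series a l -> is_series b l.
Proof. intros H Ha. exact (@is_series_ext C_AbsRing C_NormedModule a b l H Ha). Qed.

Lemma is_seriesC_plus (a b : nat -> C) la lb : is_series a la -> is_series b lb ->
  is_series (fun n => a n + b n)%C (la + lb)%C.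
Proof. intros Ha Hb. exact (@is_series_plus C_AbsRing C_NormedModule a b la lb Ha Hb). Qed.

Lemma is_seriesC_minus (a b : nat -> C) la lb : is_series a la -> is_series b lb ->
  is_series (fun n => a n - b n)%C (la - lb)%C.
Proof. intros Ha Hb. exact (@is_series_minus C_AbsRing C_NormedModule a b la lb Ha Hb). Qed.

Lemma is_seriesC_scal (c : C) (a : nat -> C) la : is_series a la ->
  is_series (fun n => c * a n)%C (c * la)%C.
Proof. intros Ha. exact (@is_series_scal_l C_AbsRing C_NormedModule c a la Ha). Qed.

Lemma ex_seriesC_dom (a : nat -> C) (b : nat -> R) : (forall n, Cmod (a n) <= b n) -> ex_series b ->
  exists l, is_series a l.
Proof. intros H Hb. apply (@ex_series_le C_AbsRing C_CompleteNormedModule a b); auto. Qed.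

Lemma is_seriesC_dom_bound (a : nat -> C) (b : nat -> R) l : (forall n, Cmod (a n) <= b n) -> ex_series b ->
  is_series a l -> Cmod l <= Series b.
Proof.
  intros H Hb Ha.
  assert (Hbp : forall n, 0 <= b n) by (intro n; eapply Rle_trans; [apply Cmod_ge_0|apply H]).
  destruct Hb as [lb Hb]. rewrite (is_series_unique _ _ Hb).
  apply Rnot_lt_le; intro Hlt.
  destruct (is_seriesC_elim a l Ha (Cmod l - lb)) as [N HN]; [lra|].
  specialize (HN N (le_n _)).
  assert (Hs : Cmod (sum_n a N) <= sum_f_R0 b N).
  { clear HN. induction N. - rewrite sum_O; simpl; apply H.
    - rewrite sum_Sn; simpl. eapply Rle_trans; [apply Cmod_triangle|]. apply Rplus_le_compat; auto. }
  assert (Hp : sum_f_R0 b N <= lb).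
  { apply is_series_R_lim in Hb. apply (is_lim_seq_incr_compare _ _ Hb). intro n; simpl; specialize (Hbp (S n)); lra. }
  assert (Ht : Cmod l <= Cmod (sum_n a N - l)%C + Cmod (sum_n a N)).
  { replace l with ((- (sum_n a N - l)) + sum_n a N)%C at 1 by ring.
    eapply Rle_trans; [apply Cmod_triangle|]. rewrite Cmod_opp. lra. }
  lra.
Qed.


Lemma DS_C (u : nat -> nat -> C) (d : nat -> nat -> R) (r c : nat -> C) :
  (forall k n, Cmod (u k n) <= d k n) -> (forall k, ex_series (d k)) ->
  ex_series (fun k => Series (d k)) ->
  (forall k, is_series (u k) (r k)) -> (forall n, is_series (fun k => u k n) (c n)) ->
  exists L, is_series r L /\ is_series c L.
Proof.
  intros Hud Hd Hds Hr Hc.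
  destruct (DS_R (fun k n => Re (u k n)) d (fun k => Re (r k)) (fun n => Re (c n))) as [L1 [H1 H1']]; auto.
  { intros k n; eapply Rle_trans; [apply re_le_Cmod|apply Hud]. }
  { intro k; apply (is_seriesC_Re _ _ (Hr k)). }
  { intro n; apply (is_seriesC_Re _ _ (Hc n)). }
  destruct (DS_R (fun k n => Im (u k n)) d (fun k => Im (r k)) (fun n => Im (c n))) as [L2 [H2 H2']]; auto.
  { intros k n; eapply Rle_trans; [apply im_le_Cmod|apply Hud]. }
  { intro k; apply (is_seriesC_Im _ _ (Hr k)). }
  { intro n; apply (is_seriesC_Im _ _ (Hc n)). }
  exists (L1, L2); split; apply is_seriesC_ReIm; auto.
Qed.

Lemma is_series_shift1 {K : AbsRing} {V : NormedModule K} (a : nat -> V) l :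
  is_series a l -> is_series (fun n => match n with O => zero | S m => a m end) l.
Proof.
  intro H. apply is_series_decr_1. match goal with |- is_series _ ?x => replace x with l; [exact H|] end. symmetry; etransitivity; [|apply plus_zero_r]; f_equal; exact (@opp_zero (NormedModule.AbelianGroup K V)).
Qed.

Lemma is_series_shift {K : AbsRing} {V : NormedModule K} (a : nat -> V) l i :
  is_series a l -> is_series (fun n => if (i <=? n)%nat then a (n - i)%nat else zero) l.
Proof.
  intro H. induction i.
  - eapply is_series_ext; [|exact H]. intro n. simpl. rewrite Nat.sub_0_r. reflexivity.
  - eapply is_series_ext; [|exact (is_series_shift1 _ _ IHi)]. intro n. destruct n; simpl; reflexivity.
Qed.

Lemma Cpow_add (z : C) m n : (z ^ (m + n) = z ^ m * z ^ n)%C.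
Proof. induction m as [|m IHm]. - simpl; ring. - simpl; rewrite IHm; ring. Qed.

Lemma pow_n_Cpow (z : C) n : pow_n z n = (z ^ n)%C.
Proof. induction n; simpl; [reflexivity|]. rewrite IHn; reflexivity. Qed.

Lemma sum_n_RtoC (f : nat -> R) n : sum_n (fun k => RtoC (f k)) n = RtoC (sum_f_R0 f n).
Proof.
  induction n. - rewrite sum_O; reflexivity.
  - rewrite sum_Sn, IHn. simpl. change (plus (RtoC (sum_f_R0 f n)) (RtoC (f (S n))) = RtoC (sum_f_R0 f n + f (S n))).
    rewrite RtoC_plus. reflexivity.
Qed.

Lemma sum_n_mult_r_C (f : nat -> C) (c : C) n : sum_n (fun k => f k * c)%C n = (sum_n f n * c)%C.
Proof.
  induction n. - rewrite !sum_O; reflexivity.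
  - rewrite !sum_Sn, IHn. change ((sum_n f n * c) + f (S n) * c = (sum_n f n + f (S n)) * c)%C. ring.
Qed.

Lemma is_series_finite {K : AbsRing} {V : NormedModule K} (a : nat -> V) N :
  (forall k, (N < k)%nat -> a k = zero) -> is_series a (sum_n a N).
Proof.
  intro H. unfold is_series. apply filterlim_locally. intro eps. exists N. intros n Hn.
  replace (sum_n a n) with (sum_n a N); [apply ball_center|].
  induction Hn; auto. rewrite sum_Sn, H by lia. rewrite plus_zero_r; auto.
Qed.

Lemma pseriesC_iff (p : nat -> R) z l :
  is_pseries (fun n => RtoC (p n)) z l <-> is_series (fun n => RtoC (p n) * z ^ n)%C l.
Proof.
  unfold is_pseries. split; intro H; (eapply is_seriesC_ext; [|exact H]); intro n;
  rewrite pow_n_Cpow; apply Cmult_comm.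
Qed.

Lemma pseriesC_exists (p : nat -> R) (z : C) :
  ex_series (fun n => Rabs (p n)) -> Cmod z <= 1 -> exists l, is_series (fun n => RtoC (p n) * z ^ n)%C l.
Proof.
  intros Hp Hz. apply (ex_seriesC_dom _ (fun n => Rabs (p n))); auto.
  intro n. rewrite Cmod_mult, Cmod_R, Cmod_pow.
  assert (0 <= Cmod z) by apply Cmod_ge_0.
  assert (Cmod z ^ n <= 1) by (rewrite <- (pow1 n); apply pow_incr; lra).
  assert (0 <= Rabs (p n)) by apply Rabs_pos. nra.
Qed.

Lemma ex_series_abs_pow (p : nat -> R) (r : R) :
  ex_series (fun n => Rabs (p n)) -> 0 <= r <= 1 -> ex_series (fun n => Rabs (p n) * r ^ n).
Proof.
  intros Hp Hr. apply (ex_series_dom _ (fun n => Rabs (p n))); auto.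
  intro n. assert (0 <= r ^ n) by (apply pow_le; lra).
  assert (r ^ n <= 1) by (rewrite <- (pow1 n); apply pow_incr; lra).
  assert (0 <= Rabs (p n)) by apply Rabs_pos.
  rewrite Rabs_pos_eq by nra. nra.
Qed.

Lemma pseriesC_bound (p : nat -> R) (z : C) l :
  ex_series (fun n => Rabs (p n)) -> Cmod z <= 1 -> is_series (fun n => RtoC (p n) * z ^ n)%C l ->
  Cmod l <= Series (fun n => Rabs (p n) * Cmod z ^ n).
Proof.
  intros Hp Hz Hl. apply (is_seriesC_dom_bound _ _ _ (fun n => ltac:(rewrite Cmod_mult, Cmod_R, Cmod_pow; apply Rle_refl))); auto.
  apply ex_series_abs_pow; auto. split; auto; apply Cmod_ge_0.
Qed.

Lemma pseriesC_real (p : nat -> R) (x : R) l :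
  ex_series (fun n => Rabs (p n)) -> Rabs x <= 1 -> is_series (fun n => RtoC (p n) * RtoC x ^ n)%C l ->
  l = RtoC (Series (fun n => p n * x ^ n)).
Proof.
  intros Hp Hx Hl.
  assert (He : ex_series (fun n => p n * x ^ n)).
  { apply (ex_series_dom _ (fun n => Rabs (p n) * Rabs x ^ n)).
    - intro n; rewrite Rabs_mult, RPow_abs; lra.
    - apply ex_series_abs_pow; auto; split; auto; apply Rabs_pos. }
  apply (is_seriesC_unique _ _ _ Hl).
  eapply is_seriesC_ext; [|apply is_seriesC_RtoC, Series_correct, He].
  intro n; simpl. rewrite RtoC_mult, RtoC_pow. reflexivity.
Qed.


Lemma Cmod_pow_le1 (z : C) n : Cmod z <= 1 -> Cmod (z ^ n) <= 1.
Proof.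
  intro Hz. rewrite Cmod_pow. assert (0 <= Cmod z) by apply Cmod_ge_0.
  rewrite <- (pow1 n); apply pow_incr; lra.
Qed.

Lemma cauchyC (p q : nat -> R) (z : C) P Q :
  ex_series (fun n => Rabs (p n)) -> ex_series (fun n => Rabs (q n)) -> Cmod z <= 1 ->
  is_series (fun n => RtoC (p n) * z ^ n)%C P -> is_series (fun n => RtoC (q n) * z ^ n)%C Q ->
  is_series (fun n => RtoC (sum_f_R0 (fun i => (p i * q (n - i)%nat)%R) n) * z ^ n)%C (P * Q)%C.
Proof.
  intros Hp Hq Hz HP HQ.
  set (u := fun i n => if (i <=? n)%nat then (RtoC (p i) * z ^ i * (RtoC (q (n - i)%nat) * z ^ (n - i)))%C else RtoC 0).
  set (d := fun i n => if (i <=? n)%nat then Rabs (p i) * Rabs (q (n - i)%nat) else 0).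
  assert (Hd : forall i, is_series (d i) (Rabs (p i) * Series (fun n => Rabs (q n)))).
  { intro i. eapply is_series_extR; [|apply (is_series_shift (V:=R_NormedModule) (fun m => Rabs (p i) * Rabs (q m)) _ i); apply is_series_scalR; apply Series_correct; exact Hq].
    intro n; unfold d; destruct (i <=? n)%nat; reflexivity. }
  destruct (DS_C u d (fun i => RtoC (p i) * z ^ i * Q)%C (fun n => RtoC (sum_f_R0 (fun i => (p i * q (n - i)%nat)%R) n) * z ^ n)%C) as [L [HL1 HL2]].
  - intros i n; unfold u, d; destruct (Nat.leb_spec i n).
    + rewrite !Cmod_mult, !Cmod_R.
      assert (H1 := Cmod_pow_le1 z i Hz). assert (H2 := Cmod_pow_le1 z (n - i) Hz).
      assert (0 <= Cmod (z ^ i)) by apply Cmod_ge_0. assert (0 <= Cmod (z ^ (n-i))) by apply Cmod_ge_0.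
      assert (0 <= Rabs (p i)) by apply Rabs_pos. assert (0 <= Rabs (q (n-i)%nat)) by apply Rabs_pos.
      assert (Rabs (p i) * Cmod (z ^ i) <= Rabs (p i)) by nra.
      assert (Rabs (q (n-i)%nat) * Cmod (z ^ (n-i)) <= Rabs (q (n-i)%nat)) by nra.
      assert (0 <= Rabs (p i) * Cmod (z ^ i)) by nra.
      assert (0 <= Rabs (q (n-i)%nat) * Cmod (z ^ (n-i))) by nra.
      nra.
    + rewrite Cmod_R, Rabs_R0; lra.
  - intro i; eexists; apply Hd.
  - apply ex_series_extR with (fun i => Rabs (p i) * Series (fun n => Rabs (q n))).
    { intro i; symmetry; apply is_series_unique; apply Hd. }
    apply (ex_series_scal_r (Series (fun n => Rabs (q n))) _ Hp).
  - intro i. eapply is_seriesC_ext; [|apply (is_series_shift (V:=C_NormedModule) (fun m => RtoC (p i) * z ^ i * (RtoC (q m) * z ^ m))%C _ i); apply is_seriesC_scal; exact HQ].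
    intro n; unfold u; destruct (i <=? n)%nat; reflexivity.
  - intro n. eapply is_seriesC_ext with (a := fun i => u i n); [reflexivity|].
    replace (RtoC (sum_f_R0 (fun i => (p i * q (n - i)%nat)%R) n) * z ^ n)%C with (sum_n (fun i => u i n) n).
    + apply (is_series_finite (V:=C_NormedModule)). intros k Hk. unfold u.
      destruct (Nat.leb_spec k n); [lia|reflexivity].
    + rewrite (sum_n_ext_loc _ (fun i => RtoC (p i * q (n - i)%nat)%R * z ^ n)%C).
      * rewrite sum_n_mult_r_C, sum_n_RtoC. reflexivity.
      * intros i Hi. unfold u. destruct (Nat.leb_spec i n); [|lia].
        assert (E : (RtoC (p i) * z ^ i * (RtoC (q (n - i)%nat) * z ^ (n - i)) = RtoC (p i * q (n - i)%nat)%R * z ^ n)%C).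
        { rewrite RtoC_mult. replace (z ^ n)%C with (z ^ (i + (n - i)))%C by (f_equal; lia). rewrite Cpow_add. ring. }
        exact E.
  - assert (HPQ : is_series (fun i => RtoC (p i) * z ^ i * Q)%C (Q * P)%C).
    { eapply is_seriesC_ext; [|apply (is_seriesC_scal Q _ _ HP)]. intro i; simpl; ring. }
    rewrite Cmult_comm.
    rewrite (is_seriesC_unique _ _ _ HPQ HL1). exact HL2.
Qed.

Lemma composeC (a : nat -> R) (B : nat -> nat -> R) (z : C) (w : nat -> C) :
  (forall k, 0 <= a k) -> ex_series a -> (forall k n, 0 <= B k n) ->
  (forall k, ex_series (B k)) -> (forall k, Series (B k) <= 1) -> Cmod z <= 1 ->
  (forall k, is_series (fun n => RtoC (B k n) * z ^ n)%C (w k)) ->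
  (forall n, ex_series (fun k => a k * B k n)) /\
  ex_series (fun n => Series (fun k => a k * B k n)) /\
  exists L, is_series (fun n => RtoC (Series (fun k => (a k * B k n)%R)) * z ^ n)%C L /\
            is_series (fun k => RtoC (a k) * w k)%C L.
Proof.
  intros Ha Hae HB HBe HB1 Hz Hw.
  set (d := fun k n => a k * B k n).
  assert (Hdp : forall k n, 0 <= d k n) by (intros; unfold d; apply Rmult_le_pos; auto).
  assert (Hdr : forall k, is_series (d k) (a k * Series (B k))).
  { intro k; apply is_series_scalR, Series_correct, HBe. }
  assert (Hdre : forall k, ex_series (d k)) by (intro k; eexists; apply Hdr).
  assert (Hds : ex_series (fun k => Series (d k))).
  { apply (ex_series_dom _ a); auto. intro k. rewrite (is_series_unique _ _ (Hdr k)).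
    assert (0 <= Series (B k)) by (apply series_ge0; auto).
    rewrite Rabs_pos_eq by (apply Rmult_le_pos; auto). specialize (Ha k); specialize (HB1 k). nra. }
  destruct (fubini_pos d Hdp Hdre Hds) as [F1 [F2 F3]].
  split; [exact F1|]. split; [exact F2|].
  destruct (DS_C (fun k n => RtoC (d k n) * z ^ n)%C d (fun k => RtoC (a k) * w k)%C
      (fun n => RtoC (Series (fun k => (a k * B k n)%R)) * z ^ n)%C) as [L [HL1 HL2]]; auto.
  - intros k n. rewrite Cmod_mult, Cmod_R. assert (H1 := Cmod_pow_le1 z n Hz).
    assert (0 <= Cmod (z ^ n)) by apply Cmod_ge_0. specialize (Hdp k n). rewrite Rabs_pos_eq by auto. nra.
  - intro k. eapply is_seriesC_ext; [|apply (is_seriesC_scal (RtoC (a k)) _ _ (Hw k))].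
    intro n; unfold d; simpl. rewrite RtoC_mult. ring.
  - intro n. assert (H := is_seriesC_scal (z ^ n)%C _ _ (is_seriesC_RtoC _ _ (Series_correct _ (F1 n)))).
    rewrite Cmult_comm. eapply is_seriesC_ext; [|exact H].
    intro k; unfold d; simpl. ring.
  - exists L; split; assumption.
Qed.

Lemma composeR (a : nat -> R) (B : nat -> nat -> R) (x : R) (w : nat -> R) :
  (forall k, 0 <= a k) -> ex_series a -> (forall k n, 0 <= B k n) ->
  (forall k, ex_series (B k)) -> (forall k, Series (B k) <= 1) -> Rabs x <= 1 ->
  (forall k, is_series (fun n => B k n * x ^ n) (w k)) ->
  (forall n, ex_series (fun k => a k * B k n)) /\
  ex_series (fun n => Series (fun k => a k * B k n)) /\
  exists L, is_series (fun n => Series (fun k => a k * B k n) * x ^ n) L /\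
            is_series (fun k => a k * w k) L.
Proof.
  intros Ha Hae HB HBe HB1 Hx Hw.
  destruct (composeC a B (RtoC x) (fun k => RtoC (w k)) Ha Hae HB HBe HB1) as [F1 [F2 [L [HL1 HL2]]]].
  - rewrite Cmod_R; exact Hx.
  - intro k. eapply is_seriesC_ext; [|apply (is_seriesC_RtoC _ _ (Hw k))]. intro n; simpl.
    rewrite RtoC_mult, RtoC_pow; reflexivity.
  - split; [exact F1|]. split; [exact F2|]. exists (Re L). split.
    + eapply is_series_extR; [|apply (is_seriesC_Re _ _ HL1)]. intro n. simpl. rewrite <- RtoC_pow. simpl. ring.
    + eapply is_series_extR; [|apply (is_seriesC_Re _ _ HL2)]. intro n. simpl. ring.
Qed.


Lemma series_zero : Series (fun _ => 0) = 0.
Proof. apply is_series_unique, is_series_zero_R. Qed.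

Lemma sum_f_R0_zero (a : nat -> R) N : (forall k, (k <= N)%nat -> a k = 0) -> sum_f_R0 a N = 0.
Proof.
  intro H. induction N; simpl. - apply H; lia.
  - rewrite IHN by (intros; apply H; lia). rewrite H by lia. ring.
Qed.

Lemma series_single (a : nat -> R) m : (forall k, k <> m -> a k = 0) -> is_series a (a m).
Proof.
  intro H. replace (a m) with (sum_n a m).
  - apply (is_series_finite (V:=R_NormedModule)). intros k Hk; apply H; lia.
  - rewrite sum_n_Reals. destruct m; simpl; [reflexivity|].
    rewrite sum_f_R0_zero by (intros; apply H; lia). ring.
Qed.

Fixpoint psum (f : nat -> R) (k : nat) : R :=
  match k with O => 0 | S k => psum f k + f k end.

Lemma series_split (a : nat -> R) k : ex_series a ->
  Series a = psum a k + Series (fun j => a (k + j)%nat).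
Proof.
  intro He. induction k; simpl.
  - rewrite Rplus_0_l. apply Series_ext; reflexivity.
  - rewrite IHk. rewrite (Series_incr_1 (fun j => a (k + j)%nat)).
    + rewrite Nat.add_0_r. rewrite Rplus_assoc. f_equal. f_equal. apply Series_ext; intro n; f_equal; lia.
    + apply (ex_series_incr_n a k) in He. exact He.
Qed.

Lemma psum_zero (f : nat -> R) k : (forall j, (j < k)%nat -> f j = 0) -> psum f k = 0.
Proof. induction k; simpl; intro H; [reflexivity|]. rewrite IHk by (intros; apply H; lia). rewrite H by lia. ring. Qed.

Lemma ex_series_pow_dom (d : nat -> R) x : ex_series (fun n => Rabs (d n)) -> Rabs x <= 1 ->
  ex_series (fun n => d n * x ^ n).
Proof.
  intros Hd Hx. apply (ex_series_dom _ (fun n => Rabs (d n) * Rabs x ^ n)).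
  - intro n; rewrite Rabs_mult, RPow_abs; lra.
  - apply ex_series_abs_pow; auto; split; auto; apply Rabs_pos.
Qed.

Lemma IT_zero (d : nat -> R) (del : R) : 0 < del -> ex_series (fun n => Rabs (d n)) ->
  (forall x, 0 < x < del -> Series (fun n => d n * x ^ n) = 0) -> forall n, d n = 0.
Proof.
  intros Hdel Hd H n. induction n as [n IH] using (well_founded_induction Wf_nat.lt_wf).
  set (S' := Series (fun j => Rabs (d (n + S j)%nat))).
  assert (HS'e : ex_series (fun j => Rabs (d (n + S j)%nat))).
  { apply (ex_series_incr_n (fun j => Rabs (d j)) (S n)) in Hd. eapply ex_series_extR; [|exact Hd].
    intro j; replace (n + S j)%nat with (S n + j)%nat by lia; reflexivity. }
  assert (HS' : 0 <= S') by (apply series_ge0; auto; intro; apply Rabs_pos).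
  assert (Key : forall x, 0 < x < del -> x <= 1 -> Rabs (d n) <= x * S').
  { intros x Hx Hx1.
    assert (Hxa : Rabs x <= 1) by (rewrite Rabs_pos_eq; lra).
    assert (He := ex_series_pow_dom d x Hd Hxa).
    assert (E := H x Hx). rewrite (series_split _ n He) in E.
    rewrite psum_zero in E by (intros j Hj; rewrite IH by lia; ring).
    rewrite Rplus_0_l in E.
    assert (He2 : ex_series (fun j => d (n + j)%nat * x ^ (n + j))).
    { apply (ex_series_incr_n (fun j => d j * x ^ j) n) in He. exact He. }
    rewrite Series_incr_1 in E by exact He2.
    rewrite Nat.add_0_r in E.
    set (T := Series (fun k => d (n + S k)%nat * x ^ (n + S k))) in E.
    assert (HT : Rabs T <= x ^ (S n) * S').
    { unfold T, S'. rewrite <- Series_scal_l. apply series_abs_dom.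
      - intro j. rewrite Rabs_mult, <- RPow_abs, (Rabs_pos_eq x) by lra.
        replace (n + S j)%nat with (S n + j)%nat by lia. rewrite pow_add.
        assert (0 <= x ^ S n) by (apply pow_le; lra).
        assert (0 <= x ^ j <= 1) by (split; [apply pow_le; lra|rewrite <- (pow1 j); apply pow_incr; lra]).
        assert (0 <= Rabs (d (n + S j)%nat)) by apply Rabs_pos.
        replace (S n + j)%nat with (n + S j)%nat by lia. assert (x ^ S n * x ^ j <= x ^ S n) by nra. nra.
      - apply (ex_series_scal_l (V:=R_NormedModule)); auto. }
    assert (Hxn : 0 < x ^ n) by (apply pow_lt; lra).
    assert (Hdn : d n * x ^ n = - T) by lra.
    assert (Rabs (d n) * x ^ n <= x ^ S n * S').
    { rewrite <- (Rabs_pos_eq (x ^ n)) by lra. rewrite <- Rabs_mult, Hdn, Rabs_Ropp. exact HT. }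
    simpl in H0. 
    apply Rmult_le_reg_r with (x ^ n); auto. nra. }
  destruct (Req_dec (d n) 0) as [E|E]; auto. exfalso.
  assert (Hpos : 0 < Rabs (d n)) by (apply Rabs_pos_lt; auto).
  set (x := Rmin (del / 2) (Rmin (1/2) (Rabs (d n) / (2 * (S' + 1))))).
  assert (Hx1 : x <= del / 2) by apply Rmin_l.
  assert (Hx2 : x <= 1/2) by (eapply Rle_trans; [apply Rmin_r|apply Rmin_l]).
  assert (Hx3 : x <= Rabs (d n) / (2 * (S' + 1))) by (eapply Rle_trans; [apply Rmin_r|apply Rmin_r]).
  assert (Hx0 : 0 < x).
  { unfold x. apply Rmin_pos; [lra|apply Rmin_pos; [lra|]]. apply Rdiv_lt_0_compat; lra. }
  assert (K := Key x ltac:(lra) ltac:(lra)).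
  assert (x * S' <= Rabs (d n) / (2 * (S' + 1)) * S') by (apply Rmult_le_compat_r; lra).
  assert (Rabs (d n) / (2 * (S' + 1)) * S' < Rabs (d n)).
  { unfold Rdiv. apply Rlt_le_trans with (Rabs (d n) * / (2 * (S' + 1)) * (2 * (S' + 1))).
    - apply Rmult_lt_compat_l; [|lra]. apply Rmult_lt_0_compat; auto. apply Rinv_0_lt_compat; lra.
    - rewrite Rmult_assoc, Rinv_l by lra. lra. }
  lra.
Qed.

Lemma IT (a b : nat -> R) (del : R) : 0 < del -> ex_series (fun n => Rabs (a n)) ->
  ex_series (fun n => Rabs (b n)) ->
  (forall x, 0 < x < del -> Series (fun n => a n * x ^ n) = Series (fun n => b n * x ^ n)) ->
  forall n, a n = b n.
Proof.
  intros Hdel Ha Hb H n.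
  assert (Z := IT_zero (fun n => a n - b n) (Rmin del 1) (Rmin_pos _ _ Hdel Rlt_0_1)).
  apply Rminus_diag_uniq. apply Z.
  - apply (ex_series_dom _ (fun n => Rabs (a n) + Rabs (b n))).
    + intro k; rewrite Rabs_Rabsolu. apply Rabs_triang_inv2 || (unfold Rminus; eapply Rle_trans; [apply Rabs_triang|rewrite Rabs_Ropp; lra]).
    + apply (ex_series_plus (V:=R_NormedModule)); auto.
  - intros x Hx. assert (x < del) by (eapply Rlt_le_trans; [apply Hx|apply Rmin_l]).
    assert (x <= 1) by (left; eapply Rlt_le_trans; [apply Hx|apply Rmin_r]).
    assert (Hxa : Rabs x <= 1) by (rewrite Rabs_pos_eq; lra).
    rewrite (Series_ext _ (fun n => a n * x ^ n - b n * x ^ n)) by (intro; ring).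
    rewrite Series_minus; [|apply ex_series_pow_dom; auto|apply ex_series_pow_dom; auto].
    rewrite H by lra. ring.
Qed.


Definition G (mu : Ninf -> R) (x : R) : R := Series (fun n => mu (Fin n) * x ^ n).

Lemma prob_abs mu : is_prob mu -> ex_series (fun n => Rabs (mu (Fin n))).
Proof.
  intros [H1 [H2 H3]]. eapply ex_series_extR; [|exact H2]. intro n; rewrite Rabs_pos_eq; auto.
Qed.

Lemma prob_fm mu : is_prob mu -> 0 <= fin_mass mu <= 1 /\ mu Inf = 1 - fin_mass mu.
Proof.
  intros [H1 [H2 H3]]. assert (0 <= fin_mass mu) by (apply series_ge0; auto).
  specialize (H1 Inf). split; [split|]; lra.
Qed.

Lemma prob_le1 mu y : is_prob mu -> mu y <= 1.
Proof.
  intros Hp. destruct (prob_fm mu Hp) as [[H1 H2] H3]. destruct Hp as [Hn [He Hs]].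
  destruct y as [n|].
  - eapply Rle_trans; [apply (term_le_series (fun n => mu (Fin n)) n); auto|]. exact H2.
  - lra.
Qed.

Lemma G_ex mu x : is_prob mu -> Rabs x <= 1 -> ex_series (fun n => mu (Fin n) * x ^ n).
Proof. intros Hp Hx. apply ex_series_pow_dom; auto. apply prob_abs; auto. Qed.

Lemma prob_eq_fin mu nu : is_prob mu -> is_prob nu -> (forall n, mu (Fin n) = nu (Fin n)) ->
  forall y, mu y = nu y.
Proof.
  intros Hm Hn H [n|]; auto.
  rewrite (proj2 (prob_fm _ Hm)), (proj2 (prob_fm _ Hn)). unfold fin_mass.
  rewrite (Series_ext _ _ H). reflexivity.
Qed.

Lemma prob_eq_G mu nu (del : R) : is_prob mu -> is_prob nu -> 0 < del ->
  (forall x, 0 < x < del -> G mu x = G nu x) -> forall y, mu y = nu y.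
Proof.
  intros Hm Hn Hd H. apply prob_eq_fin; auto.
  apply (IT (fun n => mu (Fin n)) (fun n => nu (Fin n)) del Hd (prob_abs _ Hm) (prob_abs _ Hn) H).
Qed.

Lemma conv_G mu nu x : is_prob mu -> is_prob nu -> Rabs x <= 1 ->
  is_series (fun n => conv mu nu (Fin n) * x ^ n) (G mu x * G nu x).
Proof.
  intros Hm Hn Hx.
  assert (H := is_series_mult (fun n => mu (Fin n) * x ^ n) (fun n => nu (Fin n) * x ^ n) (G mu x) (G nu x)
    (Series_correct _ (G_ex _ _ Hm Hx)) (Series_correct _ (G_ex _ _ Hn Hx))).
  eapply is_series_extR; [|apply H].
  - intro n. simpl. rewrite Rmult_comm, scal_sum. apply sum_eq. intros i Hi.
    replace (x ^ n) with (x ^ i * x ^ (n - i)) by (rewrite <- pow_add; f_equal; lia). ring.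
  - apply (ex_series_dom _ (fun n => Rabs (mu (Fin n)))); [|apply prob_abs; auto].
    intro n; rewrite Rabs_Rabsolu, Rabs_mult, <- RPow_abs.
    assert (0 <= Rabs x ^ n <= 1) by (split; [apply pow_le, Rabs_pos|rewrite <- (pow1 n); apply pow_incr; split; [apply Rabs_pos|auto]]).
    assert (0 <= Rabs (mu (Fin n))) by apply Rabs_pos. nra.
  - apply (ex_series_dom _ (fun n => Rabs (nu (Fin n)))); [|apply prob_abs; auto].
    intro n; rewrite Rabs_Rabsolu, Rabs_mult, <- RPow_abs.
    assert (0 <= Rabs x ^ n <= 1) by (split; [apply pow_le, Rabs_pos|rewrite <- (pow1 n); apply pow_incr; split; [apply Rabs_pos|auto]]).
    assert (0 <= Rabs (nu (Fin n))) by apply Rabs_pos. nra.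
Qed.

Lemma G_1 mu : G mu 1 = fin_mass mu.
Proof. unfold G, fin_mass. apply Series_ext; intro n; rewrite pow1; ring. Qed.

Lemma conv_prob mu nu : is_prob mu -> is_prob nu -> is_prob (conv mu nu).
Proof.
  intros Hm Hn.
  assert (H := conv_G mu nu 1 Hm Hn ltac:(rewrite Rabs_R1; lra)).
  assert (H' : is_series (fun n => conv mu nu (Fin n)) (fin_mass mu * fin_mass nu)).
  { rewrite <- !G_1. eapply is_series_extR; [|exact H]. intro n; simpl; rewrite pow1; ring. }
  destruct (prob_fm _ Hm) as [[Fm1 Fm2] Fm3]. destruct (prob_fm _ Hn) as [[Fn1 Fn2] Fn3].
  destruct Hm as [Hm0 _]. destruct Hn as [Hn0 _].
  split; [|split].
  - intros [k|]; simpl.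
    + apply cond_pos_sum. intro; apply Rmult_le_pos; auto.
    + assert (0 <= mu Inf) by apply Hm0. assert (0 <= nu Inf) by apply Hn0. apply Rplus_le_le_0_compat; apply Rmult_le_pos; lra.
  - eexists; exact H'.
  - unfold fin_mass at 1. rewrite (is_series_unique _ _ H'). simpl. rewrite Fm3, Fn3. ring.
Qed.

Lemma dirac_prob y : is_prob (dirac y).
Proof.
  assert (Hd : forall z, 0 <= dirac y z) by (intro z; unfold dirac; destruct (Ninf_eq_dec z y); lra).
  destruct y as [m|].
  - assert (H : is_series (fun n => dirac (Fin m) (Fin n)) 1).
    { assert (E : dirac (Fin m) (Fin m) = 1) by (unfold dirac; destruct (Ninf_eq_dec (Fin m) (Fin m)); congruence).
      assert (H0 : is_series (fun n => dirac (Fin m) (Fin n)) (dirac (Fin m) (Fin m))).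
      { apply (series_single (fun n => dirac (Fin m) (Fin n))). intros k Hk. unfold dirac.
        destruct (Ninf_eq_dec (Fin k) (Fin m)); [congruence|reflexivity]. }
      rewrite E in H0. exact H0. }
    split; [auto|split; [eexists; exact H|]].
    unfold fin_mass; rewrite (is_series_unique _ _ H). unfold dirac. destruct (Ninf_eq_dec Inf (Fin m)); [congruence|ring].
  - assert (H : is_series (fun n => dirac Inf (Fin n)) 0).
    { eapply is_series_extR; [|apply is_series_zero_R]. intro n; unfold dirac; destruct (Ninf_eq_dec (Fin n) Inf); [congruence|reflexivity]. }
    split; [auto|split; [eexists; exact H|]].
    unfold fin_mass; rewrite (is_series_unique _ _ H). unfold dirac. destruct (Ninf_eq_dec Inf Inf); [ring|congruence].
Qed.

Lemma G_dirac m x : G (dirac (Fin m)) x = x ^ m.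
Proof.
  unfold G. replace (x ^ m) with (dirac (Fin m) (Fin m) * x ^ m) by (unfold dirac; destruct (Ninf_eq_dec (Fin m) (Fin m)); [ring|congruence]).
  apply is_series_unique. apply (series_single (fun n => dirac (Fin m) (Fin n) * x ^ n)).
  intros k Hk. unfold dirac. destruct (Ninf_eq_dec (Fin k) (Fin m)); [congruence|ring].
Qed.

Fixpoint cpow (mu : Ninf -> R) (m : nat) : Ninf -> R :=
  match m with O => dirac (Fin 0) | S m => conv mu (cpow mu m) end.

Lemma cpow_prob mu m : is_prob mu -> is_prob (cpow mu m).
Proof. intro H. induction m; simpl; [apply dirac_prob|apply conv_prob; auto]. Qed.

Lemma G_cpow mu m x : is_prob mu -> Rabs x <= 1 -> G (cpow mu m) x = G mu x ^ m.
Proof.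
  intros Hp Hx. induction m; simpl.
  - rewrite G_dirac. reflexivity.
  - unfold G at 1. rewrite (is_series_unique _ _ (conv_G _ _ _ Hp (cpow_prob _ _ Hp) Hx)). rewrite IHm. reflexivity.
Qed.

Lemma conv_ext mu mu' nu nu' z : (forall y, mu y = mu' y) -> (forall y, nu y = nu' y) ->
  conv mu nu z = conv mu' nu' z.
Proof.
  intros H1 H2. destruct z as [k|]; simpl.
  - apply sum_eq; intros; rewrite H1, H2; reflexivity.
  - unfold fin_mass. rewrite !H1, !H2. rewrite (Series_ext _ _ (fun n => H1 (Fin n))), (Series_ext _ _ (fun n => H2 (Fin n))). reflexivity.
Qed.

Lemma G_bound mu y : is_prob mu -> 0 <= y <= 1 ->
  0 <= G mu y <= mu (Fin 0) + y * (1 - mu (Fin 0)).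
Proof.
  intros Hp Hy. assert (Hp' := Hp). destruct Hp' as [H0 [He Hs]].
  destruct (prob_fm _ Hp) as [[F1 F2] F3].
  assert (Hya : Rabs y <= 1) by (rewrite Rabs_pos_eq; lra).
  assert (HGe := G_ex _ _ Hp Hya).
  split. { apply series_ge0; auto. intro n; apply Rmult_le_pos; auto; apply pow_le; lra. }
  unfold G. rewrite Series_incr_1 by exact HGe. simpl. rewrite Rmult_1_r.
  assert (Hfe := Series_incr_1 _ He). unfold fin_mass in F2.
  assert (Hse : ex_series (fun k => mu (Fin (S k)))) by (apply (ex_series_incr_1 (fun n => mu (Fin n))) in He; exact He).
  assert (Series (fun k => mu (Fin (S k)) * (y * y ^ k)) <= y * Series (fun k => mu (Fin (S k)))).
  { rewrite <- Series_scal_l. apply Series_le.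
    - intro k. assert (0 <= y ^ k <= 1) by (split; [apply pow_le; lra|rewrite <- (pow1 k); apply pow_incr; lra]).
      specialize (H0 (Fin (S k))). assert (y * y ^ k <= y) by nra. assert (0 <= y * y ^ k) by nra. split; nra.
    - apply (ex_series_scal_l (V:=R_NormedModule)); auto. }
  assert (Series (fun k => mu (Fin (S k))) <= 1 - mu (Fin 0)) by lra.
  nra.
Qed.


Lemma CV_radius_ge1 (p : nat -> R) : ex_series (fun n => Rabs (p n)) -> Rbar_le 1 (CV_radius p).
Proof.
  intro Hp. destruct (CV_radius_bounded p) as [Hub _]. apply Hub.
  exists (Series (fun n => Rabs (p n))). intro n. rewrite pow1, Rmult_1_r.
  apply (term_le_series (fun n => Rabs (p n))); auto. intro; apply Rabs_pos.
Qed.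

Lemma in_radius (p : nat -> R) x : ex_series (fun n => Rabs (p n)) -> Rabs x < 1 -> Rbar_lt (Rabs x) (CV_radius p).
Proof.
  intros Hp Hx. assert (H := CV_radius_ge1 p Hp).
  destruct (CV_radius p) as [c| |]; simpl in *; auto; lra.
Qed.

Definition Epoly (z h : C) (n : nat) : C := ((z + h) ^ n - z ^ n - RtoC (INR n) * h * z ^ (n - 1))%C.
Definition epoly (r e : R) (n : nat) : R := (r + e) ^ n - r ^ n - INR n * e * r ^ (n - 1).

Lemma Epoly_rec z h n : Epoly z h (S n) = ((z + h) * Epoly z h n + RtoC (INR n) * h * h * z ^ (n - 1))%C.
Proof.
  unfold Epoly. destruct n.
  - simpl. apply C_eq_ReIm; simpl; ring.
  - replace (S (S n) - 1)%nat with (S n) by lia. replace (S n - 1)%nat with n by lia.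
    rewrite !S_INR, !RtoC_plus. simpl. ring.
Qed.

Lemma epoly_rec r e n : epoly r e (S n) = (r + e) * epoly r e n + INR n * e * e * r ^ (n - 1).
Proof.
  unfold epoly. destruct n.
  - simpl. ring.
  - replace (S (S n) - 1)%nat with (S n) by lia. replace (S n - 1)%nat with n by lia.
    rewrite !S_INR. simpl. ring.
Qed.

Lemma Epoly_bound z h n : Cmod (Epoly z h n) <= epoly (Cmod z) (Cmod h) n.
Proof.
  induction n.
  - unfold Epoly, epoly. simpl. replace ((1 - 1 - RtoC 0 * h * 1))%C with (RtoC 0) by (apply C_eq_ReIm; simpl; ring).
    rewrite Cmod_R, Rabs_R0. lra.
  - rewrite Epoly_rec, epoly_rec.
    eapply Rle_trans; [apply Cmod_triangle|]. rewrite !Cmod_mult, Cmod_R, Cmod_pow.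
    rewrite Rabs_pos_eq by apply pos_INR.
    apply Rplus_le_compat.
    + apply Rmult_le_compat; [apply Cmod_ge_0|apply Cmod_ge_0| |exact IHn].
      apply Cmod_triangle.
    + lra.
Qed.

Lemma holo_pseries (p : nat -> R) (F : C -> C) :
  (forall n, 0 <= p n) -> ex_series p ->
  (forall z, inD z -> is_series (fun n => RtoC (p n) * z ^ n)%C (F z)) ->
  forall z, inD z -> @ex_derive C_AbsRing C_NormedModule F z.
Proof.
  intros Hp0 Hp HF z Hz. unfold inD in Hz.
  assert (Hpa : ex_series (fun n => Rabs (p n))) by (eapply ex_series_extR; [|exact Hp]; intro; rewrite Rabs_pos_eq; auto).
  set (r := Cmod z).
  assert (Hr0 : 0 <= r) by apply Cmod_ge_0.
  assert (Hr1 : r < 1) by (unfold r; exact Hz).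
  assert (Hrad : Rbar_lt (Rabs r) (CV_radius p)) by (apply in_radius; auto; rewrite Rabs_pos_eq; auto).
  set (c := PS_derive p).
  assert (Hc : ex_series (fun n => Rabs (c n * r ^ n))).
  { apply CV_disk_inside. unfold c. rewrite CV_radius_derive. exact Hrad. }
  destruct (ex_seriesC_dom (fun k => RtoC (c k) * z ^ k)%C (fun n => Rabs (c n * r ^ n))) as [Dz HDz]; auto.
  { intro n. rewrite Cmod_mult, Cmod_R, Cmod_pow, Rabs_mult, <- RPow_abs. unfold r. rewrite (Rabs_pos_eq (Cmod z)) by apply Cmod_ge_0. lra. }
  exists Dz. split; [apply is_linear_scal_l|].
  intros x Hx. apply (@is_filter_lim_locally_unique C_AbsRing (AbsRing_NormedModule C_AbsRing)) in Hx. subst x.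
  intro eps.
  assert (Hg := is_derive_PSeries p r Hrad). apply is_derive_Reals in Hg.
  destruct (Hg eps (cond_pos eps)) as [del Hdel].
  set (rho := Rmin del ((1 - r) / 2)).
  assert (Hrho : 0 < rho) by (apply Rmin_pos; [apply cond_pos|lra]).
  exists (mkposreal (rho / 2) ltac:(lra)). intros y Hy.
  change (Cmod (minus y z) < rho / 2) in Hy.
  set (h := minus y z). change (minus y z) with h in Hy.
  assert (Hh : Cmod h < rho) by nra.
  assert (Hyzh : @eq C y (z + h)%C). { apply C_eq_ReIm; unfold h; simpl; unfold Re, Im; ring. }
  set (eta := Cmod h) in *.
  assert (He0 : 0 <= eta) by apply Cmod_ge_0.
  assert (Hyd : inD y).
  { unfold inD. rewrite Hyzh. eapply Rle_lt_trans; [apply Cmod_triangle|].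
    fold r. assert (rho <= (1 - r)/2) by apply Rmin_r. fold eta. lra. }
  assert (HT : is_series (fun n => RtoC (p n) * Epoly z h n)%C (minus (minus (F y) (F z)) (scal h Dz))).
  { assert (H1 := HF y Hyd). assert (H2 := HF z Hz).
    assert (H3 := is_series_shift1 (V:=C_NormedModule) _ _ (is_seriesC_scal h _ _ HDz)).
    assert (H4 := is_seriesC_minus _ _ _ _ (is_seriesC_minus _ _ _ _ H1 H2) H3).
    eapply is_seriesC_ext; [|exact H4].
    intro n. rewrite Hyzh. unfold Epoly. destruct n.
    - simpl. change (zero : C_NormedModule) with (RtoC 0). ring.
    - unfold c, PS_derive. simpl (S n - 1)%nat. rewrite Nat.sub_0_r. rewrite RtoC_mult. simpl. ring. }
  assert (Hre : Rabs (r + eta) < 1).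
  { rewrite Rabs_pos_eq by lra. assert (rho <= (1 - r)/2) by apply Rmin_r. lra. }
  assert (Ht : is_series (fun n => p n * epoly r eta n) (PSeries p (r + eta) - PSeries p r - eta * PSeries c r)).
  { assert (H1 : is_series (fun n => p n * (r + eta) ^ n) (PSeries p (r + eta))).
    { apply Series_correct. apply ex_series_pow_dom; auto; lra. }
    assert (H2 : is_series (fun n => p n * r ^ n) (PSeries p r)).
    { apply Series_correct. apply ex_series_pow_dom; auto. rewrite Rabs_pos_eq; lra. }
    assert (H3 : is_series (fun n => c n * r ^ n) (PSeries c r)).
    { apply Series_correct. apply ex_series_Rabs. exact Hc. }
    assert (H4 := is_series_shift1 (V:=R_NormedModule) _ _ (is_series_scalR eta _ _ H3)).
    assert (H5 := is_series_minusR _ _ _ _ (is_series_minusR _ _ _ _ H1 H2) H4).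
    eapply is_series_extR; [|exact H5].
    intro n. unfold epoly. destruct n.
    - simpl. change (zero : R_NormedModule) with 0. ring.
    - unfold c, PS_derive. simpl (S n - 1)%nat. rewrite Nat.sub_0_r. ring. }
  assert (Htp : forall n, 0 <= p n * epoly r eta n).
  { intro n. apply Rmult_le_pos; auto. eapply Rle_trans; [apply Cmod_ge_0|]. apply (Epoly_bound z h n). }
  assert (Hbound : Cmod (minus (minus (F y) (F z)) (scal h Dz)) <= PSeries p (r + eta) - PSeries p r - eta * PSeries c r).
  { rewrite <- (is_series_unique _ _ Ht).
    apply (is_seriesC_dom_bound _ _ _ (fun n => ltac:(rewrite Cmod_mult, Cmod_R, Rabs_pos_eq by apply Hp0;
      apply Rmult_le_compat_l; [apply Hp0|apply Epoly_bound]))); [eexists; exact Ht|exact HT]. }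
  change (norm (minus (minus (F y) (F z)) (scal (minus y z) Dz)) <= eps * norm (minus y z)).
  fold h. change (Cmod (minus (minus (F y) (F z)) (scal h Dz)) <= eps * Cmod h). fold eta.
  destruct (Req_dec eta 0) as [E0|E0].
  - assert (Hh0 : h = RtoC 0) by (apply Cmod_eq_0; auto).
    replace (minus (minus (F y) (F z)) (scal h Dz)) with (RtoC 0).
    + rewrite Cmod_R, Rabs_R0. apply Rmult_le_pos; [left; apply cond_pos|apply Cmod_ge_0].
    + rewrite Hyzh, Hh0. change (RtoC 0 = F (z + 0) - F z - 0 * Dz)%C. rewrite Cplus_0_r. ring.
  - assert (Heta : 0 < eta) by lra.
    assert (Hed : Rabs eta < del) by (rewrite Rabs_pos_eq by lra; assert (rho <= del) by apply Rmin_l; lra).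
    specialize (Hdel eta E0 Hed).
    fold c in Hdel. fold (PSeries c r) in Hdel.
    eapply Rle_trans; [exact Hbound|].
    replace (PSeries p (r + eta) - PSeries p r - eta * PSeries c r) with (eta * ((PSeries p (r + eta) - PSeries p r) / eta - PSeries c r)) by (field; lra).
    rewrite Rmult_comm. apply Rmult_le_compat_r; [lra|].
    eapply Rle_trans; [apply Rle_abs|]. left; exact Hdel.
Qed.


Lemma no_bad (Bad : R -> R -> Prop) :
  (forall s r t, 0 <= s -> s <= r -> r <= t -> Bad s t -> Bad s r \/ Bad r t) ->
  (forall c, 0 <= c -> exists del, 0 < del /\ forall s t, in_Delta s t -> Rabs (s - c) < del ->
      Rabs (t - c) < del -> ~ Bad s t) ->
  forall s t, in_Delta s t -> ~ Bad s t.
Proof.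
  intros Hsplit Hdiag s0 t0 [Hs0 Hst] Hbad.
  set (E := fun r => s0 <= r <= t0 /\ Bad r t0).
  destruct (completeness E) as [c [Hc1 Hc2]].
  - exists t0. intros r [Hr _]; lra.
  - exists s0. split; [lra|auto].
  - assert (Hsc : s0 <= c) by (apply Hc1; split; [lra|auto]).
    assert (Hct : c <= t0) by (apply Hc2; intros r [Hr _]; lra).
    destruct (Hdiag c ltac:(lra)) as [del [Hdel Hd]].
    assert (Hex : exists r, E r /\ c - del < r).
    { apply Classical_Prop.NNPP. intro Hn. assert (c <= c - del); [|lra].
      apply Hc2. intros r Hr. apply Rnot_lt_le. intro Hlt. apply Hn. exists r; auto. }
    destruct Hex as [r [[Hr1 Hr2] Hr3]].
    assert (Hrc : r <= c) by (apply Hc1; split; auto).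
    set (r' := Rmin (c + del / 2) t0).
    assert (Hr'1 : r' <= c + del / 2) by apply Rmin_l.
    assert (Hr'2 : r' <= t0) by apply Rmin_r.
    assert (Hr'3 : c <= r') by (apply Rmin_glb; lra).
    destruct (Hsplit r r' t0 ltac:(lra) ltac:(lra) Hr'2 Hr2) as [B|B].
    + apply (Hd r r'); auto. split; lra.
      rewrite Rabs_left1 by lra; lra. rewrite Rabs_pos_eq by lra; lra.
    + destruct (Req_dec r' t0) as [E0|E0].
      * rewrite E0 in B. apply (Hd t0 t0); auto. split; lra.
        rewrite Rabs_pos_eq by lra; lra. rewrite Rabs_pos_eq by lra; lra.
      * assert (r' = c + del / 2).
        { unfold r' in *. unfold Rmin in *. destruct (Rle_dec (c + del / 2) t0); auto. congruence. }
        assert (r' <= c) by (apply Hc1; split; [lra|auto]). lra.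
Qed.

Section Part1.
Variable l : R -> R -> Ninf -> Ninf -> R.
Hypothesis Hl : branching_kernels l.

Lemma l_prob s t x : in_Delta s t -> is_prob (l s t x).
Proof. intro H; apply (bk_prob _ Hl); auto. Qed.

Lemma l_cpow s t k y : in_Delta s t -> l s t (Fin k) y = cpow (l s t (Fin 1)) k y.
Proof.
  intro Hst. revert y. induction k; intro y; simpl.
  - apply (bk_L5 _ Hl); auto.
  - assert (E := bk_L4 _ Hl s t 1 k y Hst). change (1 + k)%nat with (S k) in E. rewrite <- E. apply conv_ext; auto.
Qed.

Lemma l_G s t k x : in_Delta s t -> Rabs x <= 1 -> G (l s t (Fin k)) x = G (l s t (Fin 1)) x ^ k.
Proof.
  intros Hst Hx. rewrite <- G_cpow; auto; [|apply l_prob; auto].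
  unfold G. apply Series_ext. intro n; rewrite l_cpow; auto.
Qed.

Lemma l_pseriesC s t k z w : in_Delta s t -> Cmod z <= 1 ->
  is_series (fun n => RtoC (l s t (Fin 1) (Fin n)) * z ^ n)%C w ->
  is_series (fun n => RtoC (l s t (Fin k) (Fin n)) * z ^ n)%C (w ^ k)%C.
Proof.
  intros Hst Hz Hw. induction k.
  - simpl. assert (H := is_series_finite (V:=C_NormedModule) (fun n => RtoC (l s t (Fin 0) (Fin n)) * z ^ n)%C 0).
    rewrite sum_O in H.
    assert (E : forall n, l s t (Fin 0) (Fin n) = dirac (Fin 0) (Fin n)) by (intro; apply (bk_L5 _ Hl); auto).
    replace (RtoC 1) with (RtoC (l s t (Fin 0) (Fin 0)) * z ^ 0)%C.
    + apply H. intros k Hk. rewrite E. unfold dirac. destruct (Ninf_eq_dec (Fin k) (Fin 0)); [inversion e; lia|].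
      change (RtoC 0 * z ^ k = RtoC 0)%C. ring.
    + rewrite E. unfold dirac. destruct (Ninf_eq_dec (Fin 0) (Fin 0)); [|congruence]. simpl; ring.
  - assert (Hp1 := prob_abs _ (l_prob s t (Fin 1) Hst)). assert (Hpk := prob_abs _ (l_prob s t (Fin k) Hst)).
    assert (H := cauchyC _ _ z _ _ Hp1 Hpk Hz Hw IHk).
    eapply is_seriesC_ext; [|exact H]. intro n.
    assert (E := bk_L4 _ Hl s t 1 k (Fin n) Hst). change (1 + k)%nat with (S k) in E. rewrite <- E. reflexivity.
Qed.

Lemma l_L2fin s t u n : in_Delta s t -> t <= u ->
  l s u (Fin 1) (Fin n) = Series (fun k => l s t (Fin 1) (Fin k) * l t u (Fin k) (Fin n)).
Proof.
  intros Hst Htu. rewrite <- (bk_L2 _ Hl s t u (Fin 1) (Fin n) Hst Htu). unfold kstar, integ.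
  rewrite (bk_L6 _ Hl t u (Fin n)) by (destruct Hst; split; lra). unfold dirac.
  destruct (Ninf_eq_dec (Fin n) Inf); [congruence|]. ring.
Qed.

Lemma l_composeC s t u z w : in_Delta s t -> t <= u -> Cmod z <= 1 ->
  is_series (fun n => RtoC (l t u (Fin 1) (Fin n)) * z ^ n)%C w ->
  exists L, is_series (fun n => RtoC (l s u (Fin 1) (Fin n)) * z ^ n)%C L /\
            is_series (fun k => RtoC (l s t (Fin 1) (Fin k)) * w ^ k)%C L.
Proof.
  intros Hst Htu Hz Hw.
  assert (Htu' : in_Delta t u) by (destruct Hst; split; lra).
  destruct (composeC (fun k => l s t (Fin 1) (Fin k)) (fun k n => l t u (Fin k) (Fin n)) z (fun k => w ^ k)%C)
    as [_ [_ [L [HL1 HL2]]]].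
  - intro; apply (l_prob s t (Fin 1) Hst).
  - apply (l_prob s t (Fin 1) Hst).
  - intros; apply (l_prob t u (Fin k) Htu').
  - intros; apply (l_prob t u (Fin k) Htu').
  - intro k. apply (prob_fm _ (l_prob t u (Fin k) Htu')).
  - exact Hz.
  - intro k. apply l_pseriesC; auto.
  - exists L. split; auto. eapply is_seriesC_ext; [|exact HL1]. intro n. rewrite (l_L2fin s t u n Hst Htu). reflexivity.
Qed.

Lemma G_at0 mu : G mu 0 = mu (Fin 0).
Proof.
  unfold G. replace (mu (Fin 0)) with (mu (Fin 0) * 0 ^ 0) by (simpl; ring).
  apply is_series_unique, (series_single (fun n => mu (Fin n) * 0 ^ n)).
  intros k Hk. destruct k; [lia|]. simpl; ring.
Qed.

Lemma l_composeR s t u x : in_Delta s t -> t <= u -> Rabs x <= 1 ->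
  G (l s u (Fin 1)) x = G (l s t (Fin 1)) (G (l t u (Fin 1)) x).
Proof.
  intros Hst Htu Hx.
  assert (Htu' : in_Delta t u) by (destruct Hst; split; lra).
  assert (Hy : Rabs (G (l t u (Fin 1)) x) <= 1).
  { unfold G. eapply Rle_trans; [apply (series_abs_dom _ (fun n => l t u (Fin 1) (Fin n)))|].
    - intro n. rewrite Rabs_mult, <- RPow_abs. destruct (l_prob t u (Fin 1) Htu') as [H0 _].
      rewrite Rabs_pos_eq by apply H0. assert (0 <= Rabs x ^ n <= 1) by (split; [apply pow_le, Rabs_pos|rewrite <- (pow1 n); apply pow_incr; split; [apply Rabs_pos|auto]]).
      specialize (H0 (Fin (1 * n)%nat)). simpl in H0. rewrite Nat.add_0_r in H0. nra.
    - apply (l_prob t u (Fin 1) Htu').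
    - apply (prob_fm _ (l_prob t u (Fin 1) Htu')). }
  destruct (composeR (fun k => l s t (Fin 1) (Fin k)) (fun k n => l t u (Fin k) (Fin n)) x (fun k => G (l t u (Fin 1)) x ^ k))
    as [_ [_ [L [HL1 HL2]]]].
  - intro; apply (l_prob s t (Fin 1) Hst).
  - apply (l_prob s t (Fin 1) Hst).
  - intros; apply (l_prob t u (Fin k) Htu').
  - intros; apply (l_prob t u (Fin k) Htu').
  - intro k. apply (prob_fm _ (l_prob t u (Fin k) Htu')).
  - exact Hx.
  - intro k. rewrite <- l_G; auto. apply Series_correct, G_ex; auto. apply l_prob; auto.
  - unfold G at 1. rewrite (Series_ext _ (fun n => Series (fun k => l s t (Fin 1) (Fin k) * l t u (Fin k) (Fin n)) * x ^ n)).
    + rewrite (is_series_unique _ _ HL1). symmetry. apply is_series_unique. exact HL2.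
    + intro n; rewrite (l_L2fin s t u n Hst Htu); reflexivity.
Qed.

Lemma integ_dirac mu k : integ mu (dirac (Fin k)) = mu (Fin k).
Proof.
  unfold integ. replace (dirac (Fin k) Inf) with 0 by (unfold dirac; destruct (Ninf_eq_dec Inf (Fin k)); [congruence|reflexivity]).
  rewrite Rmult_0_r, Rplus_0_r.
  assert (E : mu (Fin k) * dirac (Fin k) (Fin k) = mu (Fin k)) by (unfold dirac; destruct (Ninf_eq_dec (Fin k) (Fin k)); [ring|congruence]).
  rewrite <- E.
  apply is_series_unique, (series_single (fun n => mu (Fin n) * dirac (Fin k) (Fin n))).
  intros j Hj. unfold dirac. destruct (Ninf_eq_dec (Fin j) (Fin k)); [congruence|ring].
Qed.

Lemma dirac_cont k : Ninf_continuous (dirac (Fin k)).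
Proof.
  unfold Ninf_continuous. replace (dirac (Fin k) Inf) with 0 by (unfold dirac; destruct (Ninf_eq_dec Inf (Fin k)); [congruence|reflexivity]).
  apply is_lim_seq_ext_loc with (fun _ => 0); [|apply is_lim_seq_const].
  exists (S k). intros n Hn. unfold dirac. destruct (Ninf_eq_dec (Fin n) (Fin k)); [inversion e; lia|reflexivity].
Qed.

Lemma coef_cont (n k : nat) : cont_on_Delta (fun s t => l s t (Fin n) (Fin k)).
Proof.
  intros s t Hst eps Heps. destruct (bk_L3 _ Hl n (dirac (Fin k)) (dirac_cont k) s t Hst eps Heps) as [del [Hd H]].
  exists del; split; auto. intros s' t' Hst' H1 H2. specialize (H s' t' Hst' H1 H2). rewrite !integ_dirac in H. exact H.
Qed.

Lemma l_nobad s t : in_Delta s t -> l s t (Fin 1) (Fin 0) < 1.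
Proof.
  intro Hst. assert (H := no_bad (fun s t => l s t (Fin 1) (Fin 0) = 1)).
  destruct (Rle_lt_or_eq_dec _ _ (prob_le1 _ (Fin 0) (l_prob s t (Fin 1) Hst))) as [Hlt|Heq]; auto.
  exfalso. refine (H _ _ s t Hst Heq).
  - intros s0 r t0 Hs0 Hsr Hrt Hb.
    assert (Hs0r : in_Delta s0 r) by (split; lra). assert (Hrt' : in_Delta r t0) by (split; lra).
    assert (E := l_composeR s0 r t0 0 Hs0r Hrt ltac:(rewrite Rabs_R0; lra)).
    rewrite !G_at0 in E. set (y := l r t0 (Fin 1) (Fin 0)) in *.
    assert (Hy1 : y <= 1) by apply (prob_le1 _ _ (l_prob r t0 (Fin 1) Hrt')).
    assert (Hy0 : 0 <= y) by apply (l_prob r t0 (Fin 1) Hrt').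
    destruct (Rle_lt_or_eq_dec _ _ Hy1) as [Hy|Hy]; [left|right; exact Hy].
    destruct (G_bound _ y (l_prob s0 r (Fin 1) Hs0r) ltac:(lra)) as [_ Hb2].
    assert (Hp1 := prob_le1 _ (Fin 0) (l_prob s0 r (Fin 1) Hs0r)).
    set (p0 := l s0 r (Fin 1) (Fin 0)) in *. nra.
  - intros c Hc. destruct (coef_cont 1 0 c c ltac:(split; lra) (1/2) ltac:(lra)) as [del [Hd Hdd]].
    exists del; split; auto. intros s0 t0 Hst0 H1 H2 Hb. specialize (Hdd s0 t0 Hst0 H1 H2).
    rewrite (bk_L1 _ Hl c) in Hdd by lra. unfold dirac in Hdd.
    destruct (Ninf_eq_dec (Fin 0) (Fin 1)); [congruence|]. rewrite Hb in Hdd.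
    rewrite Rminus_0_r, Rabs_R1 in Hdd. lra.
Qed.

End Part1.


Definition CS (a : nat -> C) : C := (Series (fun n => Re (a n)), Series (fun n => Im (a n))).

Lemma CS_correct (a : nat -> C) L : is_series a L -> CS a = L.
Proof.
  intro H. apply C_eq_ReIm; simpl.
  - apply is_series_unique, is_seriesC_Re; auto.
  - apply is_series_unique, is_seriesC_Im; auto.
Qed.

Lemma finite_cont (g : nat -> R -> R -> R) : (forall j, cont_on_Delta (g j)) ->
  forall s t, in_Delta s t -> forall eta, 0 < eta -> forall N, exists del, 0 < del /\
  forall s' t', in_Delta s' t' -> Rabs (s' - s) < del -> Rabs (t' - t) < del ->
  forall j, (j < N)%nat -> Rabs (g j s' t' - g j s t) < eta.
Proof.
  intros Hg s t Hst eta Heta N. induction N.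
  - exists 1; split; [lra|]. intros; lia.
  - destruct IHN as [d1 [Hd1 H1]]. destruct (Hg N s t Hst eta Heta) as [d2 [Hd2 H2]].
    exists (Rmin d1 d2); split; [apply Rmin_pos; auto|].
    intros s' t' Hst' Hs Ht j Hj.
    assert (Rmin d1 d2 <= d1) by apply Rmin_l. assert (Rmin d1 d2 <= d2) by apply Rmin_r.
    destruct (Nat.eq_dec j N) as [->|Hne].
    + apply H2; auto; lra.
    + apply H1; auto; try lra. lia.
Qed.

Lemma dirac1_series (z : C) : is_series (fun n => RtoC (dirac (Fin 1) (Fin n)) * z ^ n)%C z.
Proof.
  set (a := fun n => (RtoC (dirac (Fin 1) (Fin n)) * z ^ n)%C).
  assert (H := is_series_finite (V:=C_NormedModule) a 1).
  replace z with (sum_n a 1).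
  - apply H. intros k Hk. unfold a, dirac. destruct (Ninf_eq_dec (Fin k) (Fin 1)); [inversion e; lia|].
    change (RtoC 0 * z ^ k = RtoC 0)%C. ring.
  - rewrite sum_Sn, sum_O. unfold a, dirac. destruct (Ninf_eq_dec (Fin 0) (Fin 1)); [congruence|].
    destruct (Ninf_eq_dec (Fin 1) (Fin 1)); [|congruence]. change (RtoC 0 * z ^ 0 + RtoC 1 * z ^ 1 = z)%C. simpl. ring.
Qed.

Section Part1b.
Variable l : R -> R -> Ninf -> Ninf -> R.
Hypothesis Hl : branching_kernels l.

Definition coef s t n := l s t (Fin 1) (Fin n).

Lemma coef_pos s t n : in_Delta s t -> 0 <= coef s t n.
Proof. intro H. apply (l_prob l Hl s t (Fin 1) H). Qed.
Lemma coef_ex s t : in_Delta s t -> ex_series (coef s t).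
Proof. intro H. apply (l_prob l Hl s t (Fin 1) H). Qed.
Lemma coef_abs s t : in_Delta s t -> ex_series (fun n => Rabs (coef s t n)).
Proof. intro H. apply (prob_abs _ (l_prob l Hl s t (Fin 1) H)). Qed.
Lemma coef_le1 s t n : in_Delta s t -> coef s t n <= 1.
Proof. intro H. apply (prob_le1 _ _ (l_prob l Hl s t (Fin 1) H)). Qed.

Lemma part1_exists : exists F, gen_fun_of l F.
Proof.
  exists (fun s t z => CS (fun n => RtoC (l s t (Fin 1) (Fin n)) * z ^ n)%C).
  intros s t z Hst Hz. apply pseriesC_iff.
  destruct (pseriesC_exists (coef s t) z (coef_abs s t Hst)) as [L HL]; [unfold inD in Hz; lra|].
  unfold coef in HL. rewrite (CS_correct _ _ HL). exact HL.
Qed.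

Variable F : R -> R -> C -> C.
Hypothesis HF0 : gen_fun_of l F.

Lemma HF s t z : in_Delta s t -> inD z -> is_series (fun n => RtoC (coef s t n) * z ^ n)%C (F s t z).
Proof. intros; apply pseriesC_iff, HF0; auto. Qed.

Lemma F_inD s t z : in_Delta s t -> inD z -> inD (F s t z).
Proof.
  intros Hst Hz. unfold inD in *. assert (H0 : 0 <= Cmod z) by apply Cmod_ge_0.
  eapply Rle_lt_trans; [apply (pseriesC_bound (coef s t) z); [apply coef_abs; auto|lra|apply HF; auto]|].
  rewrite (Series_ext _ (fun n => l s t (Fin 1) (Fin n) * Cmod z ^ n)) by (intro n; rewrite Rabs_pos_eq; [reflexivity|apply coef_pos; auto]).
  destruct (G_bound _ (Cmod z) (l_prob l Hl s t (Fin 1) Hst) ltac:(lra)) as [_ Hb].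
  unfold G in Hb. eapply Rle_lt_trans; [exact Hb|].
  assert (Hp := l_nobad l Hl s t Hst). nra.
Qed.

Lemma part1_evol : top_rev_evol F.
Proof.
  constructor.
  - intros s t Hst. split.
    + apply (holo_pseries (coef s t)); [intro; apply coef_pos; auto|apply coef_ex; auto|].
      intros z Hz; apply HF; auto.
    + intros z Hz; apply F_inD; auto.
  - intros s z Hs Hz. apply (is_seriesC_unique _ _ _ (HF s s z ltac:(split; lra) Hz)).
    eapply is_seriesC_ext; [|apply dirac1_series]. intro n. unfold coef. rewrite (bk_L1 _ Hl s) by lra. reflexivity.
  - intros s t u z Hst Htu Hz.
    assert (Htu' : in_Delta t u) by (destruct Hst; split; lra).
    assert (Hsu : in_Delta s u) by (destruct Hst; split; lra).
    set (w := F t u z).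
    destruct (l_composeC l Hl s t u z w Hst Htu ltac:(unfold inD in Hz; lra) (HF t u z Htu' Hz)) as [L [HL1 HL2]].
    rewrite (is_seriesC_unique _ _ _ (HF s u z Hsu Hz) HL1).
    apply (is_seriesC_unique _ _ _ HL2). apply HF; auto. apply F_inD; auto.
  - intros s t Hst r Hr eps Heps.
    set (rho := (1 + r) / 2). set (q := r / rho).
    assert (Hrho : 0 < rho < 1) by (unfold rho; lra).
    assert (Hrrho : r <= rho) by (unfold rho; lra).
    assert (Hq : 0 <= q < 1).
    { unfold q, rho. split. - apply Rdiv_le_0_compat; lra.
      - apply (Rmult_lt_reg_r ((1+r)/2)); [lra|]. unfold Rdiv at 1. rewrite Rmult_assoc, Rinv_l by lra. lra. }
    destruct (pow_lt_1_zero q ltac:(rewrite Rabs_pos_eq; lra) (eps * (1 - rho) / 4) ltac:(apply Rdiv_lt_0_compat; nra)) as [N HN].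
    set (eta := eps * (1 - rho) / 4).
    assert (Heta : 0 < eta) by (unfold eta; apply Rdiv_lt_0_compat; nra).
    destruct (finite_cont (fun j s t => coef s t j) (fun j => coef_cont l Hl 1 j) s t Hst eta Heta N) as [del [Hdel Hd]].
    exists del; split; auto.
    intros s' t' Hst' Hs Ht z Hz.
    assert (Hz1 : inD z) by (unfold inD; lra).
    assert (HD := is_seriesC_minus _ _ _ _ (HF s' t' z Hst' Hz1) (HF s t z Hst Hz1)).
    set (d := fun n => coef s' t' n - coef s t n).
    assert (Hda : ex_series (fun n => Rabs (d n))).
    { apply (ex_series_dom _ (fun n => coef s' t' n + coef s t n)).
      - intro n; unfold d. rewrite Rabs_Rabsolu. assert (H1 := coef_pos s' t' n Hst'). assert (H2 := coef_pos s t n Hst).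
        unfold Rabs; destruct (Rcase_abs _); lra.
      - apply (ex_series_plus (V:=R_NormedModule)); apply coef_ex; auto. }
    assert (HD' : is_series (fun n => RtoC (d n) * z ^ n)%C (F s' t' z - F s t z)%C).
    { eapply is_seriesC_ext; [|exact HD]. intro n; unfold d. rewrite RtoC_minus. simpl. ring. }
    assert (Hz0 : 0 <= Cmod z) by apply Cmod_ge_0.
    eapply Rle_lt_trans; [apply (pseriesC_bound d z); auto; lra|].
    assert (Hterm : forall n, 0 <= Rabs (d n) * Cmod z ^ n <= (eta + q ^ N) * rho ^ n).
    { intro n. split; [apply Rmult_le_pos; [apply Rabs_pos|apply pow_le; lra]|].
      assert (Hzr : Cmod z ^ n <= r ^ n) by (apply pow_incr; lra).
      assert (Hrr : r ^ n = q ^ n * rho ^ n) by (unfold q; rewrite <- Rpow_mult_distr; f_equal; field; lra).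
      assert (Hqn : 0 <= q ^ n) by (apply pow_le; lra).
      assert (Hrn : 0 <= rho ^ n) by (apply pow_le; lra).
      assert (HqN : 0 <= q ^ N) by (apply pow_le; lra).
      assert (Hr0 : 0 <= r ^ n) by (apply pow_le; lra).
      assert (Hdn : 0 <= Rabs (d n)) by apply Rabs_pos.
      destruct (Compare_dec.lt_dec n N) as [Hlt|Hge].
      + assert (Hdn' : Rabs (d n) < eta) by (apply (Hd s' t' Hst' Hs Ht n Hlt)).
        assert (r ^ n <= rho ^ n) by (apply pow_incr; lra).
        assert (Rabs (d n) * Cmod z ^ n <= eta * rho ^ n).
        { apply Rmult_le_compat; try lra. apply pow_le; lra. }
        nra.
      + assert (Hd1 : Rabs (d n) <= 1).
        { unfold d. assert (H1 := coef_pos s' t' n Hst'). assert (H2 := coef_pos s t n Hst).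
          assert (H3 := coef_le1 s' t' n Hst'). assert (H4 := coef_le1 s t n Hst).
          unfold Rabs; destruct (Rcase_abs _); lra. }
        assert (Hqq : q ^ n <= q ^ N).
        { replace n with (N + (n - N))%nat by lia. rewrite pow_add.
          assert (0 <= q ^ (n - N) <= 1) by (split; [apply pow_le; lra|rewrite <- (pow1 (n - N)); apply pow_incr; lra]).
          nra. }
        assert (Rabs (d n) * Cmod z ^ n <= r ^ n).
        { assert (0 <= Cmod z ^ n) by (apply pow_le; lra). nra. }
        assert (q ^ n * rho ^ n <= q ^ N * rho ^ n) by nra.
        assert (0 <= eta * rho ^ n) by nra.
        nra. }
    eapply Rle_lt_trans; [apply Series_le; [exact Hterm|]|].
    { apply (ex_series_scal_l (V:=R_NormedModule)). apply ex_series_geom. rewrite Rabs_pos_eq; lra. }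
    rewrite Series_scal_l, Series_geom by (rewrite Rabs_pos_eq; lra).
    assert (HqN : q ^ N < eta) by (specialize (HN N (le_n _)); rewrite Rabs_pos_eq in HN by (apply pow_le; lra); exact HN).
    assert (0 <= q ^ N) by (apply pow_le; lra).
    apply Rlt_le_trans with (2 * eta * / (1 - rho)).
    + apply Rmult_lt_compat_r; [apply Rinv_0_lt_compat; lra|lra].
    + replace (2 * eta * / (1 - rho)) with (eps / 2) by (unfold eta; field; lra). lra.
Qed.

Lemma part1_PGF s t : in_Delta s t -> in_PGF (F s t).
Proof.
  intro Hst. exists (coef s t). split; [intro; apply coef_pos; auto|]. split; [apply coef_ex; auto|].
  split; [apply (prob_fm _ (l_prob l Hl s t (Fin 1) Hst))|].
  split.
  - intros [H0 _]. assert (H := l_nobad l Hl s t Hst). unfold coef in H0. lra.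
  - intros z Hz. apply HF0; auto.
Qed.

End Part1b.

Theorem part1 : forall l : R -> R -> Ninf -> Ninf -> R,
     branching_kernels l ->
     (exists F : R -> R -> C -> C, gen_fun_of l F) /\
     (forall F : R -> R -> C -> C, gen_fun_of l F ->
        top_rev_evol F /\ (forall s t, in_Delta s t -> in_PGF (F s t))).
Proof.
  intros l Hl. split; [apply (part1_exists l Hl)|].
  intros F HF. split; [apply (part1_evol l Hl F HF)|]. intros; apply (part1_PGF l Hl F HF); auto.
Qed.


Lemma cont_const c : cont_on_Delta (fun _ _ => c).
Proof. intros s t _ eps He. exists 1; split; [lra|]. intros. rewrite Rminus_diag, Rabs_R0; auto. Qed.

Lemma cont_plus g h : cont_on_Delta g -> cont_on_Delta h -> cont_on_Delta (fun s t => g s t + h s t).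
Proof.
  intros Hg Hh s t Hst eps He.
  destruct (Hg s t Hst (eps/2) ltac:(lra)) as [d1 [Hd1 H1]]. destruct (Hh s t Hst (eps/2) ltac:(lra)) as [d2 [Hd2 H2]].
  exists (Rmin d1 d2); split; [apply Rmin_pos; auto|]. intros s' t' Hst' Hs Ht.
  assert (Rmin d1 d2 <= d1) by apply Rmin_l. assert (Rmin d1 d2 <= d2) by apply Rmin_r.
  specialize (H1 s' t' Hst' ltac:(lra) ltac:(lra)). specialize (H2 s' t' Hst' ltac:(lra) ltac:(lra)).
  replace (g s' t' + h s' t' - (g s t + h s t)) with ((g s' t' - g s t) + (h s' t' - h s t)) by ring.
  eapply Rle_lt_trans; [apply Rabs_triang|]. lra.
Qed.

Lemma cont_mult g h : cont_on_Delta g -> cont_on_Delta h -> cont_on_Delta (fun s t => g s t * h s t).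
Proof.
  intros Hg Hh s t Hst eps He.
  set (A := Rabs (g s t) + 1). set (B := Rabs (h s t) + 1).
  assert (HA : 0 < A) by (unfold A; assert (0 <= Rabs (g s t)) by apply Rabs_pos; lra).
  assert (HB : 0 < B) by (unfold B; assert (0 <= Rabs (h s t)) by apply Rabs_pos; lra).
  destruct (Hg s t Hst (eps / (2 * B)) ltac:(apply Rdiv_lt_0_compat; lra)) as [d1 [Hd1 H1]].
  destruct (Hh s t Hst (Rmin 1 (eps / (2 * A))) ltac:(apply Rmin_pos; [lra|apply Rdiv_lt_0_compat; lra])) as [d2 [Hd2 H2]].
  exists (Rmin d1 d2); split; [apply Rmin_pos; auto|]. intros s' t' Hst' Hs Ht.
  assert (Rmin d1 d2 <= d1) by apply Rmin_l. assert (Rmin d1 d2 <= d2) by apply Rmin_r.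
  specialize (H1 s' t' Hst' ltac:(lra) ltac:(lra)). specialize (H2 s' t' Hst' ltac:(lra) ltac:(lra)).
  assert (H2a : Rabs (h s' t' - h s t) < 1) by (eapply Rlt_le_trans; [exact H2|apply Rmin_l]).
  assert (H2b : Rabs (h s' t' - h s t) < eps / (2 * A)) by (eapply Rlt_le_trans; [exact H2|apply Rmin_r]).
  assert (Hh' : Rabs (h s' t') <= B).
  { assert (Rabs (h s' t') - Rabs (h s t) <= Rabs (h s' t' - h s t)) by apply Rabs_triang_inv. unfold B; lra. }
  replace (g s' t' * h s' t' - g s t * h s t) with ((g s' t' - g s t) * h s' t' + g s t * (h s' t' - h s t)) by ring.
  eapply Rle_lt_trans; [apply Rabs_triang|]. rewrite !Rabs_mult.
  assert (Rabs (g s' t' - g s t) * Rabs (h s' t') <= eps / (2 * B) * B).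
  { apply Rmult_le_compat; try apply Rabs_pos; lra. }
  assert (Rabs (g s t) * Rabs (h s' t' - h s t) <= A * (eps / (2 * A))).
  { apply Rmult_le_compat; try apply Rabs_pos; [unfold A; lra|lra]. }
  replace (eps / (2 * B) * B) with (eps / 2) in * by (field; lra).
  replace (A * (eps / (2 * A))) with (eps / 2) in * by (field; lra).
  assert (Rabs (g s t) * Rabs (h s' t' - h s t) < eps / 2 \/ Rabs (g s' t' - g s t) * Rabs (h s' t') < eps / 2); [|lra].
  destruct (Req_dec (g s t) 0) as [E|E].
  - left. rewrite E, Rabs_R0. lra.
  - left. apply Rle_lt_trans with (Rabs (g s t) * (eps / (2 * A))).
    + apply Rmult_le_compat_l; [apply Rabs_pos|lra].
    + apply Rlt_le_trans with (A * (eps / (2 * A))); [apply Rmult_lt_compat_r; [apply Rdiv_lt_0_compat; lra|unfold A; lra]|].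
      right; field; lra.
Qed.

Lemma cont_sum (g : nat -> R -> R -> R) N : (forall i, (i <= N)%nat -> cont_on_Delta (g i)) ->
  cont_on_Delta (fun s t => sum_f_R0 (fun i => g i s t) N).
Proof.
  induction N; intro H; simpl.
  - apply H; lia.
  - apply (cont_plus (fun s t => sum_f_R0 (fun i => g i s t) N) (g (S N))); [apply IHN; intros; apply H; lia|apply H; lia].
Qed.

Lemma psum_nonneg (f : nat -> R) k : (forall j, 0 <= f j) -> 0 <= psum f k.
Proof. intro H; induction k; simpl; [lra|specialize (H k); lra]. Qed.

Lemma psum_le (f g : nat -> R) k : (forall j, (j < k)%nat -> f j <= g j) -> psum f k <= psum g k.
Proof. intro H; induction k; simpl; [lra|]. assert (f k <= g k) by (apply H; lia). assert (psum f k <= psum g k) by (apply IHk; intros; apply H; lia). lra. Qed.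

Lemma psum_diff (f g : nat -> R) k : Rabs (psum f k - psum g k) <= psum (fun j => Rabs (f j - g j)) k.
Proof.
  induction k; simpl. - rewrite Rminus_diag, Rabs_R0; lra.
  - replace (psum f k + f k - (psum g k + g k)) with ((psum f k - psum g k) + (f k - g k)) by ring.
    eapply Rle_trans; [apply Rabs_triang|]. lra.
Qed.

Lemma psum_scal (f : nat -> R) c k : psum (fun j => c * f j) k = c * psum f k.
Proof. induction k; simpl; [ring|rewrite IHk; ring]. Qed.

Lemma series_split_le (a : nat -> R) k : (forall n, 0 <= a n) -> ex_series a ->
  Series (fun j => a (k + j)%nat) <= Series a.
Proof.
  intros H He. rewrite (series_split a k He). assert (0 <= psum a k) by (apply psum_nonneg; auto). lra.
Qed.


Lemma term_le_psum (f : nat -> R) j k : (forall i, 0 <= f i) -> (j < k)%nat -> f j <= psum f k.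
Proof.
  intros H Hjk. induction k; [lia|]. simpl. assert (0 <= psum f k) by (apply psum_nonneg; auto).
  destruct (Nat.eq_dec j k) as [->|Hne]; [lra|]. assert (f j <= psum f k) by (apply IHk; lia). specialize (H k). lra.
Qed.

Lemma integ_approx nu f eps N : is_prob nu -> (forall k, (N <= k)%nat -> Rabs (f (Fin k) - f Inf) <= eps) ->
  Rabs (integ nu f - (f Inf + psum (fun k => nu (Fin k) * (f (Fin k) - f Inf)) N)) <= eps.
Proof.
  intros Hp Hf. destruct (prob_fm _ Hp) as [[F1 F2] F3]. assert (Hp' := Hp). destruct Hp' as [H0 [He Hs]].
  assert (Heps : 0 <= eps) by (eapply Rle_trans; [apply Rabs_pos|apply (Hf N); lia]).
  set (B := eps + psum (fun j => Rabs (f (Fin j) - f Inf)) N).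
  assert (HB : forall k, Rabs (f (Fin k) - f Inf) <= B).
  { intro k. unfold B. assert (0 <= psum (fun j => Rabs (f (Fin j) - f Inf)) N) by (apply psum_nonneg; intro; apply Rabs_pos).
    destruct (Compare_dec.lt_dec k N) as [Hk|Hk].
    - assert (Rabs (f (Fin k) - f Inf) <= psum (fun j => Rabs (f (Fin j) - f Inf)) N) by (apply (term_le_psum (fun j => Rabs (f (Fin j) - f Inf))); auto; intro; apply Rabs_pos). lra.
    - assert (Rabs (f (Fin k) - f Inf) <= eps) by (apply Hf; lia). lra. }
  set (g := fun k => nu (Fin k) * (f (Fin k) - f Inf)).
  assert (Hge : ex_series g).
  { apply (ex_series_dom _ (fun k => B * nu (Fin k))).
    - intro k; unfold g; rewrite Rabs_mult, Rabs_pos_eq by apply H0. specialize (HB k). specialize (H0 (Fin k)). nra.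
    - apply (ex_series_scal_l (V:=R_NormedModule)); auto. }
  assert (Hnf : ex_series (fun k => nu (Fin k) * f (Fin k))).
  { apply (ex_series_extR (fun k => g k + nu (Fin k) * f Inf)); [intro; unfold g; ring|].
    apply (ex_series_plus (V:=R_NormedModule)); auto. apply (ex_series_scal_r (f Inf)); auto. }
  assert (E : integ nu f = Series g + f Inf).
  { unfold integ. rewrite (Series_ext _ (fun k => g k + nu (Fin k) * f Inf)) by (intro; unfold g; ring).
    rewrite Series_plus; auto; [|apply (ex_series_scal_r (f Inf)); auto].
    rewrite Series_scal_r. unfold fin_mass in F3. rewrite F3. ring. }
  rewrite E. rewrite (series_split g N Hge). fold g.
  replace (psum g N + Series (fun j => g (N + j)%nat) + f Inf - (f Inf + psum g N)) with (Series (fun j => g (N + j)%nat)) by ring.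
  eapply Rle_trans; [apply (series_abs_dom _ (fun j => eps * nu (Fin (N + j))))|].
  - intro j. unfold g. rewrite Rabs_mult, Rabs_pos_eq by apply H0. rewrite Rmult_comm. apply Rmult_le_compat_r; [apply H0|]. apply Hf; lia.
  - apply (ex_series_scal_l (V:=R_NormedModule)). apply (ex_series_incr_n (fun k => nu (Fin k)) N) in He. exact He.
  - rewrite Series_scal_l. assert (Series (fun j => nu (Fin (N + j))) <= 1).
    { eapply Rle_trans; [apply (series_split_le (fun k => nu (Fin k)) N); auto|]. exact F2. }
    nra.
Qed.

Lemma cont_psum (g : nat -> R -> R -> R) N : (forall i, cont_on_Delta (g i)) ->
  cont_on_Delta (fun s t => psum (fun i => g i s t) N).
Proof.
  intro H. induction N; simpl; [apply cont_const|].
  apply (cont_plus (fun s t => psum (fun i => g i s t) N) (g N)); auto.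
Qed.

Lemma integ_cont (nu : R -> R -> Ninf -> R) (f : Ninf -> R) :
  (forall s t, in_Delta s t -> is_prob (nu s t)) -> (forall k, cont_on_Delta (fun s t => nu s t (Fin k))) ->
  Ninf_continuous f -> cont_on_Delta (fun s t => integ (nu s t) f).
Proof.
  intros Hp Hc Hf s t Hst eps Heps.
  unfold Ninf_continuous in Hf. apply is_lim_seq_Reals in Hf.
  destruct (Hf (eps / 4) ltac:(lra)) as [N HN].
  assert (HN' : forall k, (N <= k)%nat -> Rabs (f (Fin k) - f Inf) <= eps / 4).
  { intros k Hk. left. apply (HN k). lia. }
  set (P := fun s t => psum (fun k => nu s t (Fin k) * (f (Fin k) - f Inf)) N).
  assert (HP : cont_on_Delta P).
  { apply (cont_psum (fun k s t => nu s t (Fin k) * (f (Fin k) - f Inf))). intro k.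
    apply (cont_mult (fun s t => nu s t (Fin k)) (fun _ _ => f (Fin k) - f Inf)); [apply Hc|apply cont_const]. }
  destruct (HP s t Hst (eps / 4) ltac:(lra)) as [del [Hdel Hd]].
  exists del; split; auto. intros s' t' Hst' Hs Ht.
  specialize (Hd s' t' Hst' Hs Ht). unfold P in Hd.
  assert (A1 := integ_approx (nu s' t') f (eps/4) N (Hp s' t' Hst') HN').
  assert (A2 := integ_approx (nu s t) f (eps/4) N (Hp s t Hst) HN').
  set (P1 := psum (fun k => nu s' t' (Fin k) * (f (Fin k) - f Inf)) N) in *.
  set (P2 := psum (fun k => nu s t (Fin k) * (f (Fin k) - f Inf)) N) in *.
  replace (integ (nu s' t') f - integ (nu s t) f) with
    ((integ (nu s' t') f - (f Inf + P1)) + (P1 - P2) - (integ (nu s t) f - (f Inf + P2))) by ring.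
  eapply Rle_lt_trans; [apply Rabs_triang|]. rewrite Rabs_Ropp.
  eapply Rle_lt_trans; [apply Rplus_le_compat_r; apply Rabs_triang|]. lra.
Qed.

Lemma cpow_ext mu mu' m : (forall y, mu y = mu' y) -> forall y, cpow mu m y = cpow mu' m y.
Proof. intro H. induction m; intro y; simpl; [reflexivity|]. apply conv_ext; auto. Qed.

Lemma pgf_p0_lt1 (p : nat -> R) : (forall n, 0 <= p n) -> ex_series p -> Series p <= 1 ->
  ~ (p 0%nat = 1 /\ forall n, (0 < n)%nat -> p n = 0) -> p 0%nat < 1.
Proof.
  intros H0 He Hs Hn. assert (Hp0 : p 0%nat <= 1) by (eapply Rle_trans; [apply (term_le_series p 0); auto|auto]).
  destruct (Rle_lt_or_eq_dec _ _ Hp0) as [Hl|Heq]; auto. exfalso. apply Hn. split; auto.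
  intros n Hn0. destruct n; [lia|].
  assert (Hp0n : forall m, p 0%nat <= sum_f_R0 p m).
  { induction m; simpl; [lra|]. specialize (H0 (S m)). lra. }
  assert (Hsum : p 0%nat + p (S n) <= sum_f_R0 p (S n)) by (simpl; specialize (Hp0n n); lra).
  assert (sum_f_R0 p (S n) <= Series p) by (apply partial_le_series; auto).
  specialize (H0 (S n)). lra.
Qed.


Definition PGFp (p : nat -> R) (f : C -> C) : Prop :=
    (forall n, 0 <= p n) /\ ex_series p /\ Series p <= 1 /\
    ~ (p 0%nat = 1 /\ forall n, (0 < n)%nat -> p n = 0) /\
    forall z, inD z -> is_pseries (fun n => RtoC (p n)) z (f z).

Lemma RtoC_inj' (a b : R) : RtoC a = RtoC b -> a = b.
Proof. intro H. apply (f_equal Re) in H. simpl in H. exact H. Qed.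

Lemma cpow1 mu : is_prob mu -> forall y, cpow mu 1 y = mu y.
Proof.
  intro Hp. apply (prob_eq_G _ _ 1); auto; [apply cpow_prob; auto|lra|].
  intros x Hx. rewrite G_cpow; auto; [ring|rewrite Rabs_pos_eq; lra].
Qed.

Lemma decompG mu x k : is_prob mu -> 0 <= x <= 1 -> exists T, 0 <= T <= x ^ (S k) /\
  G mu x = psum (fun j => mu (Fin j) * x ^ j) k + mu (Fin k) * x ^ k + T.
Proof.
  intros Hp Hx. assert (Hp' := Hp). destruct Hp' as [H0 [He Hs]]. destruct (prob_fm _ Hp) as [[F1 F2] F3].
  assert (Hxa : Rabs x <= 1) by (rewrite Rabs_pos_eq; lra).
  assert (HGe := G_ex _ _ Hp Hxa).
  exists (Series (fun j => mu (Fin (S k + j)) * x ^ (S k + j))). split; [split|].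
  - apply series_ge0; [intro; apply Rmult_le_pos; [apply H0|apply pow_le; lra]|].
    apply (ex_series_incr_n (fun n => mu (Fin n) * x ^ n) (S k)) in HGe. exact HGe.
  - apply Rle_trans with (Series (fun j => x ^ S k * mu (Fin (S k + j)))).
    + apply series_le_gen.
      * intro j. rewrite pow_add. assert (0 <= x ^ j <= 1) by (split; [apply pow_le; lra|rewrite <- (pow1 j); apply pow_incr; lra]).
        assert (0 <= x ^ S k) by (apply pow_le; lra). specialize (H0 (Fin (S k + j))). assert (x ^ S k * x ^ j <= x ^ S k) by nra. nra.
      * apply (ex_series_incr_n (fun n => mu (Fin n) * x ^ n) (S k)) in HGe. exact HGe.
      * apply (ex_series_scal_l (V:=R_NormedModule)). apply (ex_series_incr_n (fun n => mu (Fin n)) (S k)) in He. exact He.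
    + rewrite Series_scal_l. assert (Series (fun j => mu (Fin (S k + j))) <= 1).
      { eapply Rle_trans; [apply (series_split_le (fun n => mu (Fin n)) (S k)); auto|exact F2]. }
      assert (0 <= x ^ S k) by (apply pow_le; lra). nra.
  - unfold G. rewrite (series_split _ (S k) HGe). simpl. reflexivity.
Qed.

Section Part2.
Variable F : R -> R -> C -> C.
Hypothesis HF : top_rev_evol F.
Hypothesis HP : forall s t, in_Delta s t -> in_PGF (F s t).

Definition coefF (s t : R) : nat -> R := epsilon (inhabits (fun _ : nat => 0)) (fun p => PGFp p (F s t)).

Lemma coefF_spec s t : in_Delta s t -> PGFp (coefF s t) (F s t).
Proof. intro H. unfold coefF. apply epsilon_spec. exact (HP s t H). Qed.

Definition mu (s t : R) : Ninf -> R := fun y => match y with Fin n => coefF s t n | Inf => 1 - Series (coefF s t) end.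

Lemma mu_prob s t : in_Delta s t -> is_prob (mu s t).
Proof.
  intro H. destruct (coefF_spec s t H) as [H0 [He [Hs _]]].
  split; [|split]. - intros [n|]; simpl; auto; lra. - exact He. - unfold fin_mass; simpl. change (Series (coefF s t) + (1 - Series (coefF s t)) = 1). ring.
Qed.

Lemma F_real s t x : in_Delta s t -> Rabs x < 1 -> F s t (RtoC x) = RtoC (G (mu s t) x).
Proof.
  intros Hst Hx. destruct (coefF_spec s t Hst) as [_ [_ [_ [_ Hz]]]].
  assert (Hin : inD (RtoC x)) by (unfold inD; rewrite Cmod_R; auto).
  specialize (Hz _ Hin). apply pseriesC_iff in Hz.
  apply (pseriesC_real (coefF s t) x); auto; [|lra]. apply (prob_abs (mu s t)); apply mu_prob; auto.
Qed.

Lemma G_mu_lt1 s t x : in_Delta s t -> 0 <= x < 1 -> 0 <= G (mu s t) x < 1.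
Proof.
  intros Hst Hx. destruct (G_bound _ x (mu_prob s t Hst) ltac:(lra)) as [H1 H2]. split; auto.
  destruct (coefF_spec s t Hst) as [H0 [He [Hs [Hn _]]]].
  assert (Hp0 := pgf_p0_lt1 _ H0 He Hs Hn). simpl in H2. nra.
Qed.

Lemma G_comp s t u x : in_Delta s t -> t <= u -> 0 <= x < 1 ->
  G (mu s u) x = G (mu s t) (G (mu t u) x).
Proof.
  intros Hst Htu Hx. assert (Htu' : in_Delta t u) by (destruct Hst; split; lra).
  assert (Hsu : in_Delta s u) by (destruct Hst; split; lra).
  assert (E := ev_comp F HF s t u (RtoC x) Hst Htu ltac:(unfold inD; rewrite Cmod_R, Rabs_pos_eq; lra)).
  rewrite (F_real s u x Hsu) in E by (rewrite Rabs_pos_eq; lra).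
  rewrite (F_real t u x Htu') in E by (rewrite Rabs_pos_eq; lra).
  destruct (G_mu_lt1 t u x Htu' Hx) as [Hy0 Hy1].
  rewrite (F_real s t _ Hst) in E by (rewrite Rabs_pos_eq; lra).
  apply RtoC_inj'; auto.
Qed.

Lemma mu_id s : 0 <= s -> forall y, mu s s y = dirac (Fin 1) y.
Proof.
  intro Hs. assert (Hss : in_Delta s s) by (split; lra).
  apply (prob_eq_G _ _ 1 (mu_prob s s Hss) (dirac_prob _) Rlt_0_1).
  intros x Hx. rewrite G_dirac, pow_1.
  assert (E := ev_id F HF s (RtoC x) Hs ltac:(unfold inD; rewrite Cmod_R, Rabs_pos_eq; lra)).
  rewrite F_real in E by (auto; rewrite Rabs_pos_eq; lra). apply RtoC_inj'; auto.
Qed.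

Lemma coef_psum_cont k : forall s t, in_Delta s t -> forall eps, 0 < eps -> exists del, 0 < del /\
  forall s' t', in_Delta s' t' -> Rabs (s' - s) < del -> Rabs (t' - t) < del ->
  psum (fun j => Rabs (mu s' t' (Fin j) - mu s t (Fin j))) k < eps.
Proof.
  induction k; intros s t Hst eps Heps.
  - exists 1; split; [lra|]. intros; simpl; lra.
  - set (x := Rmin (1/2) (eps/8)).
    assert (Hx0 : 0 < x) by (apply Rmin_pos; lra).
    assert (Hx1 : x <= 1/2) by apply Rmin_l. assert (Hx2 : x <= eps/8) by apply Rmin_r.
    assert (Hxk : 0 < x ^ k) by (apply pow_lt; lra).
    destruct (IHk s t Hst (Rmin (eps/2) (x ^ k * eps / 8)) ltac:(apply Rmin_pos; [lra|apply Rdiv_lt_0_compat; nra])) as [d1 [Hd1 H1]].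
    destruct (ev_cont F HF s t Hst (1/2) ltac:(lra) (x ^ k * eps / 8) ltac:(apply Rdiv_lt_0_compat; nra)) as [d2 [Hd2 H2]].
    exists (Rmin d1 d2); split; [apply Rmin_pos; auto|]. intros s' t' Hst' Hs Ht.
    assert (Rmin d1 d2 <= d1) by apply Rmin_l. assert (Rmin d1 d2 <= d2) by apply Rmin_r.
    specialize (H1 s' t' Hst' ltac:(lra) ltac:(lra)).
    assert (H1a : psum (fun j => Rabs (mu s' t' (Fin j) - mu s t (Fin j))) k < eps / 2) by (eapply Rlt_le_trans; [exact H1|apply Rmin_l]).
    assert (H1b : psum (fun j => Rabs (mu s' t' (Fin j) - mu s t (Fin j))) k < x ^ k * eps / 8) by (eapply Rlt_le_trans; [exact H1|apply Rmin_r]).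
    specialize (H2 s' t' Hst' ltac:(lra) ltac:(lra) (RtoC x) ltac:(rewrite Cmod_R, Rabs_pos_eq; lra)).
    rewrite (F_real s' t' x Hst'), (F_real s t x Hst) in H2 by (rewrite Rabs_pos_eq; lra).
    rewrite <- RtoC_minus, Cmod_R in H2.
    destruct (decompG (mu s' t') x k (mu_prob s' t' Hst') ltac:(lra)) as [T' [HT' E']].
    destruct (decompG (mu s t) x k (mu_prob s t Hst) ltac:(lra)) as [T [HT E]].
    set (P' := psum (fun j => mu s' t' (Fin j) * x ^ j) k) in *.
    set (P := psum (fun j => mu s t (Fin j) * x ^ j) k) in *.
    assert (HPP : Rabs (P' - P) <= psum (fun j => Rabs (mu s' t' (Fin j) - mu s t (Fin j))) k).
    { eapply Rle_trans; [apply psum_diff|]. apply psum_le. intros j _.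
      replace (mu s' t' (Fin j) * x ^ j - mu s t (Fin j) * x ^ j) with ((mu s' t' (Fin j) - mu s t (Fin j)) * x ^ j) by ring.
      rewrite Rabs_mult, (Rabs_pos_eq (x ^ j)) by (apply pow_le; lra).
      assert (0 <= x ^ j <= 1) by (split; [apply pow_le; lra|rewrite <- (pow1 j); apply pow_incr; lra]).
      assert (0 <= Rabs (mu s' t' (Fin j) - mu s t (Fin j))) by apply Rabs_pos. nra. }
    assert (HTT : Rabs (T' - T) <= x ^ S k) by (unfold Rabs; destruct (Rcase_abs _); lra).
    assert (Hck : Rabs (mu s' t' (Fin k) - mu s t (Fin k)) * x ^ k < x ^ k * (eps / 2)).
    { rewrite <- (Rabs_pos_eq (x ^ k)) at 1 by lra. rewrite <- Rabs_mult.
      replace ((mu s' t' (Fin k) - mu s t (Fin k)) * x ^ k) with ((G (mu s' t') x - G (mu s t) x) - (P' - P) - (T' - T)) by (rewrite E, E'; ring).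
      eapply Rle_lt_trans; [apply Rabs_triang|]. rewrite Rabs_Ropp.
      eapply Rle_lt_trans; [apply Rplus_le_compat_r; apply Rabs_triang|]. rewrite Rabs_Ropp.
      simpl pow in HTT. 
      assert (x * x ^ k <= x ^ k * (eps / 8)) by (rewrite Rmult_comm; apply Rmult_le_compat_l; lra).
      nra. }
    assert (Hck' : Rabs (mu s' t' (Fin k) - mu s t (Fin k)) < eps / 2).
    { apply (Rmult_lt_reg_r (x ^ k)); auto. lra. }
    assert (Eps : psum (fun j => Rabs (mu s' t' (Fin j) - mu s t (Fin j))) (S k) = psum (fun j => Rabs (mu s' t' (Fin j) - mu s t (Fin j))) k + Rabs (mu s' t' (Fin k) - mu s t (Fin k))) by reflexivity.
    rewrite Eps; lra.
Qed.

Lemma mu_cont k : cont_on_Delta (fun s t => mu s t (Fin k)).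
Proof.
  intros s t Hst eps Heps. destruct (coef_psum_cont (S k) s t Hst eps Heps) as [d [Hd H]].
  exists d; split; auto. intros s' t' Hst' Hs Ht. specialize (H s' t' Hst' Hs Ht).
  assert (Eps : psum (fun j => Rabs (mu s' t' (Fin j) - mu s t (Fin j))) (S k) = psum (fun j => Rabs (mu s' t' (Fin j) - mu s t (Fin j))) k + Rabs (mu s' t' (Fin k) - mu s t (Fin k))) by reflexivity.
  rewrite Eps in H.
  assert (0 <= psum (fun j => Rabs (mu s' t' (Fin j) - mu s t (Fin j))) k) by (apply psum_nonneg; intro; apply Rabs_pos).
  lra.
Qed.

Lemma cpow_cont m k : cont_on_Delta (fun s t => cpow (mu s t) m (Fin k)).
Proof.
  revert k. induction m; intro k; simpl.
  - apply cont_const.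
  - apply (cont_sum (fun i s t => mu s t (Fin i) * cpow (mu s t) m (Fin (k - i)))).
    intros i _. apply (cont_mult (fun s t => mu s t (Fin i))); [apply mu_cont|apply IHm].
Qed.

Definition Lk (s t : R) (x : Ninf) : Ninf -> R :=
  match x with Fin m => cpow (mu s t) m | Inf => dirac Inf end.

End Part2.


Section Part2c.
Variable F : R -> R -> C -> C.
Hypothesis HF : top_rev_evol F.
Hypothesis HP : forall s t, in_Delta s t -> in_PGF (F s t).

Notation mu := (mu F).
Notation Lk := (Lk F).

Lemma Lk_prob s t x : in_Delta s t -> is_prob (Lk s t x).
Proof. intro H. destruct x; simpl; [apply cpow_prob, (mu_prob F HP); auto|apply dirac_prob]. Qed.

Lemma cpow_dirac1 m : forall y, cpow (dirac (Fin 1)) m y = dirac (Fin m) y.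
Proof.
  apply (prob_eq_G _ _ 1); [apply cpow_prob, dirac_prob|apply dirac_prob|lra|].
  intros x Hx. rewrite G_cpow; [|apply dirac_prob|rewrite Rabs_pos_eq; lra]. rewrite !G_dirac, pow_1. reflexivity.
Qed.

Lemma Lk_L2 s t u x z : in_Delta s t -> t <= u -> kstar (Lk s t) (Lk t u) x z = Lk s u x z.
Proof.
  intros Hst Htu. assert (Htu' : in_Delta t u) by (destruct Hst; split; lra).
  assert (Hsu : in_Delta s u) by (destruct Hst; split; lra).
  destruct x as [m|].
  2:{ unfold kstar, integ. simpl. unfold dirac at 2. destruct (Ninf_eq_dec Inf Inf); [|congruence].
      rewrite (Series_ext _ (fun _ => 0)), series_zero; [ring|].
      intro n. unfold dirac. destruct (Ninf_eq_dec (Fin n) Inf); [congruence|ring]. }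
  set (A := cpow (mu s t) m). set (B := fun k => cpow (mu t u) k).
  assert (HA : is_prob A) by (apply cpow_prob, (mu_prob F HP); auto).
  assert (HB : forall k, is_prob (B k)) by (intro; apply cpow_prob, (mu_prob F HP); auto).
  set (nu := fun z => Series (fun k => A (Fin k) * B k z) + A Inf * dirac Inf z).
  assert (Hk : forall z, kstar (Lk s t) (Lk t u) (Fin m) z = nu z) by reflexivity.
  rewrite Hk. revert z.
  assert (HA0 : forall y, 0 <= A y) by apply HA.
  assert (HB0 : forall k y, 0 <= B k y) by (intros; apply HB).
  assert (HAe : ex_series (fun k => A (Fin k))) by apply HA.
  assert (HBe : forall k, ex_series (fun n => B k (Fin n))) by (intros; apply HB).
  assert (HB1 : forall k, Series (fun n => B k (Fin n)) <= 1) by (intro; apply (prob_fm _ (HB k))).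
  assert (Cx : forall x, Rabs x <= 1 -> (forall n, ex_series (fun k => A (Fin k) * B k (Fin n))) /\
     ex_series (fun n => Series (fun k => A (Fin k) * B k (Fin n))) /\
     exists L, is_series (fun n => Series (fun k => A (Fin k) * B k (Fin n)) * x ^ n) L /\
               is_series (fun k => A (Fin k) * G (B k) x) L).
  { intros x Hx. apply (composeR (fun k => A (Fin k)) (fun k n => B k (Fin n)) x (fun k => G (B k) x)); auto.
    intro k. apply Series_correct, G_ex; auto. }
  assert (Hnu_fin : forall n, nu (Fin n) = Series (fun k => A (Fin k) * B k (Fin n))).
  { intro n. unfold nu, dirac. destruct (Ninf_eq_dec (Fin n) Inf); [congruence|ring]. }
  assert (Hnu : is_prob nu).
  { destruct (Cx 1 ltac:(rewrite Rabs_R1; lra)) as [C1 [C2 [L [HL1 HL2]]]].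
    assert (HIe : ex_series (fun k => A (Fin k) * B k Inf)).
    { apply (ex_series_dom _ (fun k => A (Fin k))); auto. intro k.
      rewrite Rabs_pos_eq by (apply Rmult_le_pos; auto). assert (B k Inf <= 1) by (apply prob_le1; auto).
      specialize (HA0 (Fin k)). specialize (HB0 k Inf). nra. }
    split; [|split].
    - intros [n|].
      + rewrite Hnu_fin. apply series_ge0; [intro; apply Rmult_le_pos; auto|apply C1].
      + unfold nu. apply Rplus_le_le_0_compat; [apply series_ge0; [intro; apply Rmult_le_pos; auto|auto]|].
        apply Rmult_le_pos; auto. unfold dirac; destruct (Ninf_eq_dec Inf Inf); lra.
    - eapply ex_series_extR; [|exact C2]. intro n; rewrite Hnu_fin; reflexivity.
    - unfold fin_mass. rewrite (Series_ext _ _ Hnu_fin).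
      rewrite (Series_ext _ (fun n => Series (fun k => A (Fin k) * B k (Fin n)) * 1 ^ n)) by (intro; rewrite pow1; ring).
      rewrite (is_series_unique _ _ HL1). unfold nu. unfold dirac. destruct (Ninf_eq_dec Inf Inf); [|congruence].
      assert (HS := is_series_plusR _ _ _ _ HL2 (Series_correct _ HIe)).
      rewrite <- (is_series_unique _ _ HL2).
      assert (E : Series (fun k => A (Fin k) * G (B k) 1) + Series (fun k => A (Fin k) * B k Inf) = fin_mass A).
      { rewrite (is_series_unique _ _ HL2), <- (is_series_unique _ _ HS). unfold fin_mass. apply Series_ext.
        intro k. rewrite G_1. destruct (prob_fm _ (HB k)) as [_ E]. rewrite E. ring. }
      rewrite (is_series_unique _ _ HL2) in E |- *. destruct (prob_fm _ HA) as [_ EA].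
      rewrite Rmult_1_r. lra. }
  apply (prob_eq_G nu _ 1 Hnu); [apply cpow_prob, (mu_prob F HP); auto|lra|].
  intros x Hx. destruct (Cx x ltac:(rewrite Rabs_pos_eq; lra)) as [C1 [C2 [L [HL1 HL2]]]].
  unfold G at 1. rewrite (Series_ext _ _ (fun n => f_equal (fun v => v * x ^ n) (Hnu_fin n))).
  rewrite (is_series_unique _ _ HL1).
  set (y := G (mu t u) x).
  destruct (G_mu_lt1 F HP t u x Htu' ltac:(lra)) as [Hy0 Hy1].
  rewrite <- (is_series_unique _ _ HL2).
  rewrite (Series_ext _ (fun k => A (Fin k) * y ^ k)) by (intro k; unfold B; rewrite G_cpow; [reflexivity|apply (mu_prob F HP); auto|rewrite Rabs_pos_eq; lra]).
  change (G A y = G (cpow (mu s u) m) x).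
  unfold A. rewrite !G_cpow; try (apply (mu_prob F HP); auto); try (rewrite Rabs_pos_eq; lra).
  unfold y. rewrite <- (G_comp F HF HP s t u x Hst Htu); [reflexivity|lra].
  unfold y; rewrite Rabs_pos_eq; lra.
Qed.

Lemma Lk_branching : branching_kernels Lk.
Proof.
  constructor.
  - intros; apply Lk_prob; auto.
  - intros s x y Hs. destruct x as [m|]; simpl; [|reflexivity].
    rewrite (cpow_ext _ _ m (mu_id F HF HP s Hs)). apply cpow_dirac1.
  - intros; apply Lk_L2; auto.
  - intros n f Hf. simpl. apply (integ_cont (fun s t => cpow (mu s t) n)); auto.
    + intros; apply cpow_prob, (mu_prob F HP); auto.
    + intro k. apply (cpow_cont F HF HP).
  - intros s t m n z Hst. simpl.
    assert (Hp := (mu_prob F HP) s t Hst).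
    revert z. apply (prob_eq_G _ _ 1); [apply conv_prob; apply cpow_prob; auto|apply cpow_prob; auto|lra|].
    intros x Hx. assert (Hxa : Rabs x <= 1) by (rewrite Rabs_pos_eq; lra).
    unfold G at 1. rewrite (is_series_unique _ _ (conv_G _ _ _ (cpow_prob _ m Hp) (cpow_prob _ n Hp) Hxa)).
    rewrite !G_cpow by auto. rewrite pow_add. reflexivity.
  - intros; reflexivity.
  - intros; reflexivity.
Qed.

Lemma Lk_gen : gen_fun_of Lk F.
Proof.
  intros s t z Hst Hz. destruct (coefF_spec F HP s t Hst) as [_ [_ [_ [_ H]]]].
  specialize (H z Hz). apply pseriesC_iff in H. apply pseriesC_iff.
  eapply is_seriesC_ext; [|exact H]. intro n. assert (E : Lk s t (Fin 1) (Fin n) = mu s t (Fin n)) by (apply (cpow1 _ ((mu_prob F HP) s t Hst))). rewrite E. reflexivity.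
Qed.

Lemma Lk_unique (l' : R -> R -> Ninf -> Ninf -> R) : branching_kernels l' -> gen_fun_of l' F ->
  forall s t x y, in_Delta s t -> l' s t x y = Lk s t x y.
Proof.
  intros Hl' Hg s t x y Hst.
  assert (H1 : forall y, l' s t (Fin 1) y = mu s t y).
  { apply (prob_eq_G _ _ 1); [apply (bk_prob _ Hl'); auto|apply (mu_prob F HP); auto|lra|].
    intros x0 Hx0. assert (Hxa : Rabs x0 < 1) by (rewrite Rabs_pos_eq; lra).
    apply RtoC_inj'. rewrite <- (F_real F HP s t x0 Hst Hxa).
    assert (Hin : inD (RtoC x0)) by (unfold inD; rewrite Cmod_R; auto).
    specialize (Hg s t (RtoC x0) Hst Hin). apply pseriesC_iff in Hg.
    symmetry. apply (pseriesC_real (fun n => l' s t (Fin 1) (Fin n)) x0); auto; [|lra].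
    apply prob_abs, (bk_prob _ Hl'); auto. }
  destruct x as [m|].
  - simpl. rewrite (l_cpow l' Hl' s t m y Hst). apply cpow_ext; auto.
  - simpl. apply (bk_L6 _ Hl'); auto.
Qed.

End Part2c.

Theorem part2 : forall F : R -> R -> C -> C,
     top_rev_evol F -> (forall s t, in_Delta s t -> in_PGF (F s t)) ->
     exists l : R -> R -> Ninf -> Ninf -> R,
       branching_kernels l /\ gen_fun_of l F /\
       (forall l' : R -> R -> Ninf -> Ninf -> R,
          branching_kernels l' -> gen_fun_of l' F ->
          forall s t x y, in_Delta s t -> l' s t x y = l s t x y).
Proof.
  intros F HF HP. exists (Lk F). split; [apply Lk_branching; auto|]. split; [apply Lk_gen; auto|].
  intros; apply Lk_unique; auto.
Qed.


Theorem mainTheorem16 :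
  (forall l : R -> R -> Ninf -> Ninf -> R,
     branching_kernels l ->
     (exists F : R -> R -> C -> C, gen_fun_of l F) /\
     (forall F : R -> R -> C -> C, gen_fun_of l F ->
        top_rev_evol F /\ (forall s t, in_Delta s t -> in_PGF (F s t))))
  /\
  (forall F : R -> R -> C -> C,
     top_rev_evol F -> (forall s t, in_Delta s t -> in_PGF (F s t)) ->
     exists l : R -> R -> Ninf -> Ninf -> R,
       branching_kernels l /\ gen_fun_of l F /\
       (forall l' : R -> R -> Ninf -> Ninf -> R,
          branching_kernels l' -> gen_fun_of l' F ->
          forall s t x y, in_Delta s t -> l' s t x y = l s t x y)).
Proof.
  split; [exact part1|exact part2].
Qed.
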